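(* Let $n\ge 2$ and $y=(y_1,\dots,y_{n-1},q)\in\mathbb C^n$. The following are equivalent (''for all $j$'' means for all $j=1,\dots,[n/2]$): (1) $y\in\widetilde\Gamma_n$; (2) $\binom{n}{j}-y_jz-y_{n-j}w+\binom{n}{j}qzw\neq 0$ for all $z,w\in\mathbb D$ and all $j$; (3) for all $j$: $\|\Phi_j(\cdot,y)\|_{H^\infty}\le 1$, and if $y_jy_{n-j}=\binom{n}{j}^2q$ then in addition $|y_{n-j}|\le\binom{n}{j}$; (3') for all $j$: $\|\Phi_{n-j}(\cdot,y)\|_{H^\infty}\le 1$, and if $y_jy_{n-j}=\binom{n}{j}^2q$ then in addition $|y_j|\le\binom{n}{j}$; (4) for all $j$: $\binom{n}{j}|y_j-\bar y_{n-j}q|+|y_jy_{n-j}-\binom{n}{j}^2q|\le\binom{n}{j}^2-|y_{n-j}|^2$, and if $y_jy_{n-j}=\binom{n}{j}^2q$ then in addition $|y_j|\le\binom{n}{j}$; (4') for all $j$: $\binom{n}{j}|y_{n-j}-\bar y_{j}q|+|y_jy_{n-j}-\binom{n}{j}^2q|\le\binom{n}{j}^2-|y_{j}|^2$, and if $y_jy_{n-j}=\binom{n}{j}^2q$ then in addition $|y_{n-j}|\le\binom{n}{j}$; (5) for all $j$: $|y_j|^2-|y_{n-j}|^2+\binom{n}{j}^2|q|^2+2\binom{n}{j}|y_{n-j}-\bar y_jq|\le\binom{n}{j}^2$ and $|y_{n-j}|\le\binom{n}{j}$; (5') for all $j$: $|y_{n-j}|^2-|y_{j}|^2+\binom{n}{j}^2|q|^2+2\binom{n}{j}|y_{j}-\bar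 y_{n-j}q|\le\binom{n}{j}^2$ and $|y_{j}|\le\binom{n}{j}$; (6) $|q|\le 1$ and $|y_j|^2+|y_{n-j}|^2-\binom{n}{j}^2|q|^2+2|y_jy_{n-j}-\binom{n}{j}^2q|\le\binom{n}{j}^2$ for all $j$; (7) $|y_{n-j}-\bar y_jq|+|y_j-\bar y_{n-j}q|\le\binom{n}{j}(1-|q|^2)$ for all $j$, and if $|q|=1$ then in addition $|y_j|\le\binom{n}{j}$ for all $j$; (8) there exist $2\times2$ matrices $B_1,\dots,B_{[n/2]}$ with $\|B_j\|\le 1$, $y_j=\binom{n}{j}[B_j]_{11}$, $y_{n-j}=\binom{n}{j}[B_j]_{22}$ for all $j$, and $\det B_1=\dots=\det B_{[n/2]}=q$; (9) the same as (8) with the $B_j$ additionally symmetric; (10) $|q|\le1$ and there exists $(\beta_1,\dots,\beta_{n-1})\in\mathbb C^{n-1}$ with $y_j=\beta_j+\bar\beta_{n-j}q$, $y_{n-j}=\beta_{n-j}+\bar\beta_jq$ and $|\beta_j|+|\beta_{n-j}|\le\binom{n}{j}$ for all $j$.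
   Context: $\mathbb D$ is the open unit disc, $[x]$ the integer part, $\|\cdot\|$ the operator norm. $\widetilde{\mathbb G}_n=\{(y_1,\dots,y_{n-1},q)\in\mathbb C^n: q\in\mathbb D,\ y_j=\beta_j+\bar\beta_{n-j}q$ for some $\beta_j\in\mathbb C$ with $|\beta_j|+|\beta_{n-j}|<\binom{n}{j}$, $j=1,\dots,n-1\}$, and $\widetilde\Gamma_n$ denotes its closure in $\mathbb C^n$. For $z\in\mathbb C$, $y=(y_1,\dots,y_{n-1},q)$ and $j\in\{1,\dots,n-1\}$: $\Phi_j(z,y)=\dfrac{\binom{n}{j}qz-y_j}{y_{n-j}z-\binom{n}{j}}$ if $y_{n-j}z\ne\binom{n}{j}$ and $y_jy_{n-j}\neq\binom{n}{j}^2q$, and $\Phi_j(z,y)=y_j/\binom{n}{j}$ if $y_jy_{n-j}=\binom{n}{j}^2q$; $\|\Phi_j(\cdot,y)\|_{H^\infty}=\sup_{z\in\mathbb D}|\Phi_j(z,y)|$, understood as $+\infty$ if $\Phi_j(\cdot,y)$ is undefined somewhere on $\mathbb D$ or unbounded there. *)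

(* Defs.v *)
From HB Require Import structures.
From mathcomp Require Import all_boot all_order all_algebra.
From mathcomp Require Import boolp classical_sets reals constructive_ereal ereal.
From mathcomp Require Import complex.
Set Implicit Arguments. Unset Strict Implicit. Unset Printing Implicit Defensive.
Import Order.TTheory GRing.Theory Num.Theory.
Local Open Scope ring_scope.

Section Defs.
Variable R : realType.
Local Notation C := R[i].
Local Notation normc := (@ComplexField.Normc.normc R).

Definition bin (n j : nat) : C := ('C(n, j))%:R.

Definition disc (z : C) : Prop := `|z| < 1.

(* A point y = (y_1,...,y_{n-1},q) of C^n is represented by ys : nat -> C
   (only the values ys 1, ..., ys (n-1) matter) together with q : C. *)

(* the open set \tilde G_n *)
Definition Gt (n : nat) (ys : nat -> C) (q : C) : Prop :=
  disc q /\
  exists beta : nat -> C, forall j, (1 <= j <= n.-1)%N ->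
    ys j = beta j + (beta (n - j)%N)^* * q /\
    `|beta j| + `|beta (n - j)%N| < bin n j.

(* its closure \tilde Gamma_n in C^n (written out with the max-norm metric) *)
Definition Gammat (n : nat) (ys : nat -> C) (q : C) : Prop :=
  forall e : R, 0 < e -> exists (ys' : nat -> C) (q' : C),
    Gt n ys' q' /\ normc (q - q') < e /\
    forall j, (1 <= j <= n.-1)%N -> normc (ys j - ys' j) < e.

(* Phi_j(z, y); None means "undefined" *)
Definition Phi (n j : nat) (ys : nat -> C) (q z : C) : option C :=
  let c := bin n j in
  let a := ys j in let b := ys (n - j)%N in
  if a * b == c ^+ 2 * q then Some (a / c)
  else if b * z != c then Some ((c * q * z - a) / (b * z - c))
  else None.

(* || Phi_j(., y) ||_{H^infty} = sup over the disc, +oo if undefined somewhere *)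
Definition Hinf_norm (n j : nat) (ys : nat -> C) (q : C) : \bar R :=
  if `[< forall z, disc z -> Phi n j ys q z <> None >] then
    ereal_sup [set (normc w)%:E | w in
       [set w | exists2 z, disc z & Phi n j ys q z = Some w]]
  else +oo%E.

Definition opnorm_le1 (B : 'M[C]_2) : Prop :=
  forall v : 'cV[C]_2,
    \sum_(i < 2) `|(B *m v) i 0| ^+ 2 <= \sum_(i < 2) `|v i 0| ^+ 2.

End Defs.
Arguments bin {R}.
Arguments disc {R}.
Arguments Gt {R}.
Arguments Gammat {R}.
Arguments Phi {R}.
Arguments Hinf_norm {R}.
Arguments opnorm_le1 {R}.

(* Main.v *)
Require Import Defs.
From HB Require Import structures.
From mathcomp Require Import all_boot all_order all_algebra.
From mathcomp Require Import boolp classical_sets reals constructive_ereal ereal.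
From mathcomp Require Import complex.
From mathcomp Require Import ring lra zify.
Import Order.TTheory GRing.Theory Num.Theory.
Local Open Scope ring_scope.

Local Open Scope complex_scope. Local Open Scope ring_scope.
Set Implicit Arguments. Unset Strict Implicit.

Section Infra.
Variable R : rcfType.
Local Notation C := R[i].
Local Notation nc := (@ComplexField.Normc.normc R).

Lemma normE (z : C) : `|z| = (nc z)%:C.
Proof. by case: z. Qed.

Lemma nc_ge0 (z : C) : 0 <= nc z.
Proof. by case: z => a b /=; apply: sqrtr_ge0. Qed.

Lemma nc2 (a b : R) : nc (a +i* b) ^+ 2 = a ^+ 2 + b ^+ 2.
Proof. by rewrite /= sqr_sqrtr // addr_ge0 // sqr_ge0. Qed.

Lemma cE (a b : R) : a +i* b = a%:C + 'i * b%:C.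
Proof. by apply/eqP; rewrite eq_complex /= ?mul0r ?mul1r ?subr0 ?addr0 ?add0r ?eqxx. Qed.

Lemma conjE (a b : R) : (a +i* b)^*%R = a +i* (- b).
Proof.
rewrite cE conjC_rect; last 2 first.
- by apply/complex_realP; exists a.
- by apply/complex_realP; exists b.
by apply/eqP; rewrite eq_complex /= ?mul0r ?mul1r ?subr0 ?addr0 ?add0r ?sub0r ?opprK ?oppr0 ?subr0 ?eqxx.
Qed.

Lemma ncM (x y : C) : nc (x * y) = nc x * nc y.
Proof. exact: ComplexField.Normc.normcM. Qed.

Lemma ncD (x y : C) : nc (x + y) <= nc x + nc y.
Proof. by rewrite -lecR -!normE rmorphD /= -!normE ler_normD. Qed.

Lemma ncN (x : C) : nc (- x) = nc x.
Proof. by apply: (@complexI R); rewrite -!normE normrN. Qed.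

Lemma ncJ (x : C) : nc (x^*%R) = nc x.
Proof. by apply: (@complexI R); rewrite -!normE norm_conjC. Qed.

Lemma ncB (x y : C) : nc x - nc y <= nc (x - y).
Proof.
have := ncD (x - y) y; rewrite subrK; lra.
Qed.

Lemma ncB' (x y : C) : nc y - nc x <= nc (x - y).
Proof. by rewrite -(ncN (x - y)) opprB ncB. Qed.

Lemma nc_eq0 (x : C) : (nc x == 0) = (x == 0).
Proof. by rewrite -(inj_eq (@complexI R)) -normE normr_eq0. Qed.

Lemma ncR (r : R) : nc r%:C = `|r|.
Proof. by rewrite /= expr0n /= addr0 sqrtr_sqr. Qed.

End Infra.

Local Open Scope complex_scope. Local Open Scope ring_scope.
Set Implicit Arguments. Unset Strict Implicit.

Section Facts.
Variable R : rcfType.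
Local Notation C := R[i].
Local Notation nc := (@ComplexField.Normc.normc R).

Lemma I1 (x1 x2 x3 : C) :
  nc (x1 - x2^*%R * x3) ^+ 2 - nc (x1 * x2 - x3) ^+ 2 =
  (1 - nc x2 ^+ 2) * (nc x1 ^+ 2 - nc x3 ^+ 2).
Proof.
case: x1 => a1 b1; case: x2 => a2 b2; case: x3 => a3 b3.
rewrite conjE; simpc. rewrite !nc2. ring.
Qed.
End Facts.

Local Open Scope ring_scope.
Set Implicit Arguments. Unset Strict Implicit.

Section RealArith.
Variable R : realFieldType.


Lemma sq_le_abs (x y : R) : 0 <= y -> x ^+ 2 <= y ^+ 2 -> x <= y.
Proof. move=> hy h; nra. Qed.

Lemma sq_le (x y : R) : 0 <= x -> x <= y -> x ^+ 2 <= y ^+ 2.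
Proof. move=> hx h; nra. Qed.

Lemma R_hub_facts (A B Q E : R) : 0 <= A -> 0 <= B -> 0 <= Q ->
  Q - A * B <= E -> A * B - Q <= E ->
  Q <= 1 -> A ^+ 2 + B ^+ 2 - Q ^+ 2 + 2 * E <= 1 ->
  [/\ A <= 1, B <= 1, 0 <= 1 - A ^+ 2 + B ^+ 2 - Q ^+ 2 & 0 <= 1 - B ^+ 2 + A ^+ 2 - Q ^+ 2].
Proof.
move=> hA hB hQ e1 e2 hq h.
have s1 : (A - B) ^+ 2 <= (1 - Q) ^+ 2 by rewrite !sqrrB !expr1n; lra.
have s2 : (A + B) ^+ 2 <= (1 + Q) ^+ 2 by rewrite !sqrrD !expr1n; lra.
have t1 : A - B <= 1 - Q by apply: sq_le_abs => //; lra.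
have t1' : B - A <= 1 - Q by apply: sq_le_abs; [lra| rewrite -sqrrN opprB].
have t2 : A + B <= 1 + Q by apply: sq_le_abs => //; lra.
clear s1 s2 e1 e2 h.
split; [lra|lra| |].
- have [hbq|hbq] := lerP Q B; first nra.
  have hb : B <= A + (1 - Q) by lra.
  have : B ^+ 2 <= (A + (1 - Q)) ^+ 2 by nra.
  nra.
- have [haq|haq] := lerP Q A; first nra.
  have hb : A <= B + (1 - Q) by lra.
  have : A ^+ 2 <= (B + (1 - Q)) ^+ 2 by nra.
  nra.
Qed.

Lemma R_hub_5 (A B Q E D2 : R) : 0 <= A -> 0 <= B -> 0 <= Q -> 0 <= E -> 0 <= D2 ->
  D2 ^+ 2 - E ^+ 2 = (1 - A ^+ 2) * (B ^+ 2 - Q ^+ 2) ->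
  Q - A * B <= E -> A * B - Q <= E ->
  Q <= 1 -> A ^+ 2 + B ^+ 2 - Q ^+ 2 + 2 * E <= 1 ->
  2 * D2 <= 1 - A ^+ 2 + B ^+ 2 - Q ^+ 2.
Proof.
move=> hA hB hQ hE hD i2 e1 e2 hq h.
have [a1 b1 p1 p2] := R_hub_facts hA hB hQ e1 e2 hq h.
apply: sq_le_abs => //.
have h2 : (2 * E) ^+ 2 <= (1 - A ^+ 2 - B ^+ 2 + Q ^+ 2) ^+ 2.
  apply: sq_le; lra.
have -> : (2 * D2) ^+ 2 = (2 * E) ^+ 2 + 4 * ((1 - A ^+ 2) * (B ^+ 2 - Q ^+ 2)).
  by rewrite -i2; ring.
suff -> : (1 - A ^+ 2 + B ^+ 2 - Q ^+ 2) ^+ 2 = (1 - A ^+ 2 - B ^+ 2 + Q ^+ 2) ^+ 2 + 4 * ((1 - A ^+ 2) * (B ^+ 2 - Q ^+ 2)) by lra.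
ring.
Qed.

Lemma R_5_hub (A B Q E D2 : R) : 0 <= A -> 0 <= B -> 0 <= Q -> 0 <= E -> 0 <= D2 ->
  D2 ^+ 2 - E ^+ 2 = (1 - A ^+ 2) * (B ^+ 2 - Q ^+ 2) ->
  B - A * Q <= D2 -> A * Q - B <= D2 ->
  2 * D2 <= 1 - A ^+ 2 + B ^+ 2 - Q ^+ 2 -> B <= 1 ->
  Q <= 1 /\ A ^+ 2 + B ^+ 2 - Q ^+ 2 + 2 * E <= 1.
Proof.
move=> hA hB hQ hE hD i2 d2 d2' h hb.
have s1 : (A - Q) ^+ 2 <= (1 - B) ^+ 2 by rewrite !sqrrB !expr1n; lra.
have s2 : (A + Q) ^+ 2 <= (1 + B) ^+ 2 by rewrite !sqrrD !expr1n; lra.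
have t1 : A - Q <= 1 - B by apply: sq_le_abs => //; lra.
have t1' : Q - A <= 1 - B by apply: sq_le_abs; [lra| rewrite -sqrrN opprB].
have t2 : A + Q <= 1 + B by apply: sq_le_abs => //; lra.
have pq : 0 <= 1 - A ^+ 2 - B ^+ 2 + Q ^+ 2.
  have [hbq|hbq] := lerP Q B.
  - have ha : A <= 1 - (B - Q) by lra.
    have : A ^+ 2 <= (1 - (B - Q)) ^+ 2 by apply: sq_le; lra.
    nra.
  - have ha : A <= 1 - (Q - B) by lra.
    have : A ^+ 2 <= (1 - (Q - B)) ^+ 2 by apply: sq_le; lra.
    nra.
split; first lra.
suff : 2 * E <= 1 - A ^+ 2 - B ^+ 2 + Q ^+ 2 by lra.
apply: sq_le_abs => //.
have h2 : (2 * D2) ^+ 2 <= (1 - A ^+ 2 + B ^+ 2 - Q ^+ 2) ^+ 2.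
  apply: sq_le; lra.
have e : (2 * E) ^+ 2 = (2 * D2) ^+ 2 - 4 * ((1 - A ^+ 2) * (B ^+ 2 - Q ^+ 2)).
  by rewrite -i2; ring.
suff e' : (1 - A ^+ 2 - B ^+ 2 + Q ^+ 2) ^+ 2 = (1 - A ^+ 2 + B ^+ 2 - Q ^+ 2) ^+ 2 - 4 * ((1 - A ^+ 2) * (B ^+ 2 - Q ^+ 2)) by lra.
ring.
Qed.


Lemma R_4_hub (A B Q E D1 : R) : 0 <= A -> 0 <= B -> 0 <= Q -> 0 <= E -> 0 <= D1 ->
  D1 ^+ 2 - E ^+ 2 = (1 - B ^+ 2) * (A ^+ 2 - Q ^+ 2) ->
  Q - A * B <= E -> A * B - Q <= E ->
  A - B * Q <= D1 -> B * Q - A <= D1 ->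
  D1 + E <= 1 - B ^+ 2 -> (E = 0 -> A <= 1) ->
  Q <= 1 /\ A ^+ 2 + B ^+ 2 - Q ^+ 2 + 2 * E <= 1.
Proof.
move=> hA hB hQ hE hD i1 e1 e2 d1 d1' h hdeg.
have [hu|hu] := ltrP 0 (1 - B ^+ 2).
- have hb1 : B < 1 by nra.
  have s : D1 ^+ 2 <= (1 - B ^+ 2 - E) ^+ 2 by apply: sq_le; lra.
  have k : (1 - B ^+ 2) * (A ^+ 2 - Q ^+ 2) <= (1 - B ^+ 2) * (1 - B ^+ 2 - 2 * E).
    have -> : (1 - B ^+ 2) * (1 - B ^+ 2 - 2 * E) = (1 - B ^+ 2 - E) ^+ 2 - E ^+ 2 by ring.
    lra.
  have k2 : A ^+ 2 - Q ^+ 2 <= 1 - B ^+ 2 - 2 * E by rewrite -(ler_pM2l hu).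
  have q1 : (Q - A) * (1 + B) <= (1 - B) * (1 + B) by nra.
  have q2 : (A + Q) * (1 - B) <= (1 - B) * (1 + B) by nra.
  have q1' : Q - A <= 1 - B by nra.
  have q2' : A + Q <= 1 + B by nra.
  split; lra.
- have E0 : E = 0 by nra.
  have b1 : B = 1 by nra.
  have a1 := hdeg E0.
  rewrite E0 b1 in e1 e2 *.
  split; nra.
Qed.

Lemma R_7_5 (A B Q D1 D2 : R) : 0 <= D1 -> 0 <= D2 -> Q ^+ 2 < 1 ->
  D1 + D2 <= 1 - Q ^+ 2 ->
  (D1 - D2) * (D1 + D2) = (A ^+ 2 - B ^+ 2) * (1 - Q ^+ 2) ->
  2 * D2 <= 1 - A ^+ 2 + B ^+ 2 - Q ^+ 2.
Proof.
move=> h1 h2 hq h e.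
have hT : 0 < 1 - Q ^+ 2 by lra.
have s : D1 ^+ 2 <= (1 - Q ^+ 2 - D2) ^+ 2 by apply: sq_le; lra.
have k : (1 - Q ^+ 2) * (2 * D2) <= (1 - Q ^+ 2) * (1 - A ^+ 2 + B ^+ 2 - Q ^+ 2).
  have -> : (1 - Q ^+ 2) * (1 - A ^+ 2 + B ^+ 2 - Q ^+ 2) = (1 - Q ^+ 2) ^+ 2 - (A ^+ 2 - B ^+ 2) * (1 - Q ^+ 2) by ring.
  rewrite -e; nra.
by rewrite -(ler_pM2l hT).
Qed.

Lemma R_7_5_Q1 (A B Q D1 D2 : R) : 0 <= A -> 0 <= D1 -> 0 <= D2 -> Q = 1 ->
  D1 + D2 <= 1 - Q ^+ 2 ->
  B - A * Q <= D2 -> A * Q - B <= D2 ->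
  A ^+ 2 - B ^+ 2 + Q ^+ 2 + 2 * D2 <= 1.
Proof.
move=> hA h1 h2 hq h d2 d2'; rewrite hq in h d2 d2' *.
have D0 : D2 = 0 by nra.
rewrite D0 in d2 d2' *.
have -> : B = A by nra.
lra.
Qed.

End RealArith.

Local Open Scope complex_scope. Local Open Scope ring_scope.
Set Implicit Arguments. Unset Strict Implicit.

Section Pair.
Variable R : rcfType.
Local Notation C := R[i].
Local Notation nc := (@ComplexField.Normc.normc R).

Definition N4 (x1 x2 x3 : C) : Prop :=
  `|x1 - x2^*%R * x3| + `|x1 * x2 - x3| <= 1 - `|x2| ^+ 2 /\ (x1 * x2 = x3 -> `|x1| <= 1).
Definition N5 (x1 x2 x3 : C) : Prop :=
  `|x1| ^+ 2 - `|x2| ^+ 2 + `|x3| ^+ 2 + 2 * `|x2 - x1^*%R * x3| <= 1 /\ `|x2| <= 1.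
Definition N6 (x1 x2 x3 : C) : Prop :=
  `|x3| <= 1 /\ `|x1| ^+ 2 + `|x2| ^+ 2 - `|x3| ^+ 2 + 2 * `|x1 * x2 - x3| <= 1.
Definition N7 (x1 x2 x3 : C) : Prop :=
  `|x2 - x1^*%R * x3| + `|x1 - x2^*%R * x3| <= 1 - `|x3| ^+ 2 /\ (`|x3| = 1 -> `|x1| <= 1).
Definition N10 (x1 x2 x3 : C) : Prop :=
  `|x3| <= 1 /\ exists b1 b2 : C,
    [/\ x1 = b1 + b2^*%R * x3, x2 = b2 + b1^*%R * x3 & `|b1| + `|b2| <= 1].

Ltac realify := rewrite ?normE -?lecR ?(rmorphD, rmorphB, rmorphN, rmorphM, rmorphXn, rmorph1, rmorph_nat).

Lemma N4_real x1 x2 x3 : N4 x1 x2 x3 <->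
  nc (x1 - x2^*%R * x3) + nc (x1 * x2 - x3) <= 1 - nc x2 ^+ 2 /\
  (nc (x1 * x2 - x3) = 0 -> nc x1 <= 1).
Proof.
rewrite /N4; have -> : (`|x1 - x2^*%R * x3| + `|x1 * x2 - x3| <= 1 - `|x2| ^+ 2) =
  (nc (x1 - x2^*%R * x3) + nc (x1 * x2 - x3) <= 1 - nc x2 ^+ 2) by realify.
have -> : (`|x1| <= 1) = (nc x1 <= 1) by realify.
split=> -[h1 h2]; split=> // h3; apply: h2.
- by apply/eqP; rewrite -subr_eq0 -nc_eq0 h3.
- by apply/eqP; rewrite nc_eq0 subr_eq0 h3.
Qed.


Lemma N5_real x1 x2 x3 : N5 x1 x2 x3 <->
  nc x1 ^+ 2 - nc x2 ^+ 2 + nc x3 ^+ 2 + 2 * nc (x2 - x1^*%R * x3) <= 1 /\ nc x2 <= 1.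
Proof. by rewrite /N5; realify. Qed.

Lemma N6_real x1 x2 x3 : N6 x1 x2 x3 <->
  nc x3 <= 1 /\ nc x1 ^+ 2 + nc x2 ^+ 2 - nc x3 ^+ 2 + 2 * nc (x1 * x2 - x3) <= 1.
Proof. by rewrite /N6; realify. Qed.

Lemma normE1 (x : C) : (`|x| = 1) <-> (nc x = 1).
Proof. by rewrite normE; split => [[]|->]. Qed.

Lemma N7_real x1 x2 x3 : N7 x1 x2 x3 <->
  nc (x2 - x1^*%R * x3) + nc (x1 - x2^*%R * x3) <= 1 - nc x3 ^+ 2 /\ (nc x3 = 1 -> nc x1 <= 1).
Proof.
rewrite /N7; have -> : (`|x1| <= 1) = (nc x1 <= 1) by realify.
have -> : (`|x2 - x1^*%R * x3| + `|x1 - x2^*%R * x3| <= 1 - `|x3| ^+ 2) =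
  (nc (x2 - x1^*%R * x3) + nc (x1 - x2^*%R * x3) <= 1 - nc x3 ^+ 2) by realify.
by split=> -[h1 h2]; split=> // /normE1.
Qed.

Lemma facts x1 x2 x3 :
  (0 <= (nc x1) /\ 0 <= (nc x2) /\ 0 <= (nc x3) /\ 0 <= (nc (x1 * x2 - x3)) /\ 0 <= (nc (x1 - x2^*%R * x3)) /\ 0 <= (nc (x2 - x1^*%R * x3))) /\
  ((nc (x1 - x2^*%R * x3)) ^+ 2 - (nc (x1 * x2 - x3)) ^+ 2 = (1 - (nc x2) ^+ 2) * ((nc x1) ^+ 2 - (nc x3) ^+ 2)) /\
  ((nc (x2 - x1^*%R * x3)) ^+ 2 - (nc (x1 * x2 - x3)) ^+ 2 = (1 - (nc x1) ^+ 2) * ((nc x2) ^+ 2 - (nc x3) ^+ 2)) /\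
  ((nc x3) - (nc x1) * (nc x2) <= (nc (x1 * x2 - x3)) /\ (nc x1) * (nc x2) - (nc x3) <= (nc (x1 * x2 - x3))) /\
  ((nc x1) - (nc x2) * (nc x3) <= (nc (x1 - x2^*%R * x3)) /\ (nc x2) * (nc x3) - (nc x1) <= (nc (x1 - x2^*%R * x3))) /\
  ((nc x2) - (nc x1) * (nc x3) <= (nc (x2 - x1^*%R * x3)) /\ (nc x1) * (nc x3) - (nc x2) <= (nc (x2 - x1^*%R * x3))).
Proof.
split; first by rewrite !nc_ge0.
split; first exact: I1.
split; first by rewrite [x1 * x2]mulrC I1.
split; first by split; rewrite -ncM; [apply: ncB' | apply: ncB].
split; first by split; rewrite -(@ncJ R x2) -ncM; [apply: ncB | apply: ncB'].
by split; rewrite -(@ncJ R x1) -ncM; [apply: ncB | apply: ncB'].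
Qed.

Lemma L65 x1 x2 x3 : N6 x1 x2 x3 -> N5 x1 x2 x3.
Proof.
move/N6_real => [hq h]; apply/N5_real.
have [[hA [hB [hQ [hE [hD1 hD2]]]]] [i1 [i2 [[e1 e2] [[d1 d1'] [d2 d2']]]]]] := facts x1 x2 x3.
have [a1 b1 _ _] := R_hub_facts hA hB hQ e1 e2 hq h.
have := R_hub_5 hA hB hQ hE hD2 i2 e1 e2 hq h.
split; lra.
Qed.

Lemma L56 x1 x2 x3 : N5 x1 x2 x3 -> N6 x1 x2 x3.
Proof.
move/N5_real => [h hb]; apply/N6_real.
have [[hA [hB [hQ [hE [hD1 hD2]]]]] [i1 [i2 [[e1 e2] [[d1 d1'] [d2 d2']]]]]] := facts x1 x2 x3.
apply: (R_5_hub hA hB hQ hE hD2 i2 d2 d2') => //; lra.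
Qed.

Lemma N6_sym x1 x2 x3 : N6 x1 x2 x3 -> N6 x2 x1 x3.
Proof. by move=> [h1 h2]; split=> //; rewrite [x2 * x1]mulrC [`|x2| ^+ 2 + _]addrC. Qed.

Lemma L64 x1 x2 x3 : N6 x1 x2 x3 -> N4 x1 x2 x3.
Proof.
move=> h6; have /N6_real [hq h] := h6; apply/N4_real.
have [[hA [hB [hQ [hE [hD1 hD2]]]]] [i1 [i2 [[e1 e2] [[d1 d1'] [d2 d2']]]]]] := facts x1 x2 x3.
have [a1 b1 _ _] := R_hub_facts hA hB hQ e1 e2 hq h.
have h' : nc x2 ^+ 2 + nc x1 ^+ 2 - nc x3 ^+ 2 + 2 * nc (x1 * x2 - x3) <= 1 by lra.
have e1' : nc x3 - nc x2 * nc x1 <= nc (x1 * x2 - x3) by rewrite mulrC.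
have e2' : nc x2 * nc x1 - nc x3 <= nc (x1 * x2 - x3) by rewrite mulrC.
have := R_hub_5 hB hA hQ hE hD1 i1 e1' e2' hq h'.
split; [lra | by []].
Qed.

Lemma L46 x1 x2 x3 : N4 x1 x2 x3 -> N6 x1 x2 x3.
Proof.
move/N4_real => [h hd]; apply/N6_real.
have [[hA [hB [hQ [hE [hD1 hD2]]]]] [i1 [i2 [[e1 e2] [[d1 d1'] [d2 d2']]]]]] := facts x1 x2 x3.
exact: (R_4_hub hA hB hQ hE hD1 i1 e1 e2 d1 d1' h hd).
Qed.

Lemma L67 x1 x2 x3 : N6 x1 x2 x3 -> N7 x1 x2 x3.
Proof.
move=> h6; have /N6_real [hq h] := h6; apply/N7_real.
have [[hA [hB [hQ [hE [hD1 hD2]]]]] [i1 [i2 [[e1 e2] [[d1 d1'] [d2 d2']]]]]] := facts x1 x2 x3.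
have [a1 b1 _ _] := R_hub_facts hA hB hQ e1 e2 hq h.
have h' : nc x2 ^+ 2 + nc x1 ^+ 2 - nc x3 ^+ 2 + 2 * nc (x1 * x2 - x3) <= 1 by lra.
have e1' : nc x3 - nc x2 * nc x1 <= nc (x1 * x2 - x3) by rewrite mulrC.
have e2' : nc x2 * nc x1 - nc x3 <= nc (x1 * x2 - x3) by rewrite mulrC.
have := R_hub_5 hB hA hQ hE hD1 i1 e1' e2' hq h'.
have := R_hub_5 hA hB hQ hE hD2 i2 e1 e2 hq h.
split; [lra | by []].
Qed.

End Pair.

Local Open Scope complex_scope. Local Open Scope ring_scope.
Set Implicit Arguments. Unset Strict Implicit.

Section Pair2.
Variable R : rcfType.
Local Notation C := R[i].
Local Notation nc := (@ComplexField.Normc.normc R).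

Lemma cC0 (r : R) : (r%:C == 0 :> C) = (r == 0).
Proof. by rewrite -[0 : C](rmorph0 (real_complex R)) (inj_eq (@complexI R)). Qed.

Definition betaf (x1 x2 x3 : C) : C :=
  if `|x3| < 1 then (x1 - x2^*%R * x3) / (1 - `|x3| ^+ 2) else x1 / 2.

Lemma N7_q (x1 x2 x3 : C) : N7 x1 x2 x3 -> `|x3| <= 1.
Proof.
move=> [h _].
have : 0 <= 1 - `|x3| ^+ 2 by apply: le_trans h; rewrite addr_ge0.
by rewrite subr_ge0 expr_le1.
Qed.

Lemma ncdivR (u : C) (r : R) : 0 < r -> nc (u / r%:C) = nc u / r.
Proof.
move=> hr; rewrite ncM ComplexField.Normc.normcV ncR ger0_norm //; exact: ltW.
Qed.

Lemma sub1nC (x : C) : 1 - `|x| ^+ 2 = (1 - nc x ^+ 2)%:C.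
Proof. by rewrite normE rmorphB rmorph1 rmorphXn. Qed.

Lemma L7_10 (x1 x2 x3 : C) : N7 x1 x2 x3 ->
  [/\ `|x3| <= 1, x1 = betaf x1 x2 x3 + (betaf x2 x1 x3)^*%R * x3,
      x2 = betaf x2 x1 x3 + (betaf x1 x2 x3)^*%R * x3 &
      `|betaf x1 x2 x3| + `|betaf x2 x1 x3| <= 1].
Proof.
move=> h7; have hq := N7_q h7.
have e : (`|x3| < 1) = (nc x3 < 1) by rewrite normE -ltcR.
rewrite /betaf e.
have /N7_real [h hc] := h7.
have h0 := @nc_ge0 R x3.
have hD1 := @nc_ge0 R (x1 - x2^*%R * x3).
have hD2 := @nc_ge0 R (x2 - x1^*%R * x3).
case: ltrP => hlt.
- have ht0 : 0 < 1 - nc x3 ^+ 2 by nra.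
  have ht : 1 - x3 * x3^*%R != 0.
    by rewrite -normCK sub1nC cC0 gt_eqF.
  split => //.
  + rewrite normCK !(rmorphM, rmorphB, rmorph1, fmorphV) /= !conjCK.
    rewrite [x3^*%R * x3]mulrC. set c := x3^*%R. set d1 := x1^*%R. set d2 := x2^*%R.
    by field.
  + rewrite normCK !(rmorphM, rmorphB, rmorph1, fmorphV) /= !conjCK.
    rewrite [x3^*%R * x3]mulrC. set c := x3^*%R. set d1 := x1^*%R. set d2 := x2^*%R.
    by field.
  + rewrite sub1nC !normE !ncdivR // -(rmorph1 (real_complex R)) -rmorphD lecR.
    rewrite -mulrDl ler_pdivrMr // mul1r; lra.
- have q1 : nc x3 = 1.
    by apply/eqP; rewrite eq_le hlt andbT -lecR -normE.
  have z1 : nc (x1 - x2^*%R * x3) = 0 by rewrite q1 in h; nra.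
  have z2 : nc (x2 - x1^*%R * x3) = 0 by rewrite q1 in h; nra.
  move/eqP: z1; rewrite nc_eq0 subr_eq0 => /eqP z1.
  move/eqP: z2; rewrite nc_eq0 subr_eq0 => /eqP z2.
  have ha := hc q1.
  split => //.
  + rewrite (_ : (x2 / 2)^*%R = x2^*%R / 2); last by rewrite rmorphM fmorphV /= rmorph_nat.
    by rewrite mulrAC -z1 -splitr.
  + rewrite (_ : (x1 / 2)^*%R = x1^*%R / 2); last by rewrite rmorphM fmorphV /= rmorph_nat.
    by rewrite mulrAC -z2 -splitr.
  + have hb : nc x2 = nc x1 by rewrite z2 ncM ncJ q1 mulr1.
    have e2 : (2 : C) = (2 : R)%:C by rewrite rmorph_nat.
    rewrite e2 !normE !ncdivR // -(rmorph1 (real_complex R)) -rmorphD lecR hb; lra.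
Qed.

Lemma N_le1 (x : C) : (`|x| <= 1) = (nc x <= 1).
Proof. by rewrite normE -(rmorph1 (real_complex R)) lecR. Qed.

Lemma L10_7 (x1 x2 x3 : C) : N10 x1 x2 x3 -> N7 x1 x2 x3.
Proof.
move=> [hq [b1 [b2 [hx1 hx2 hb]]]].
rewrite N_le1 in hq.
have hb' : nc b1 + nc b2 <= 1.
  by move: hb; rewrite !normE -(rmorph1 (real_complex R)) -rmorphD lecR.
have h0 := @nc_ge0 R x3.
have hT : 0 <= 1 - nc x3 ^+ 2 by nra.
have k1 : x1 - x2^*%R * x3 = b1 * (1 - nc x3 ^+ 2)%:C.
  rewrite -sub1nC normCK hx1 hx2 rmorphD rmorphM /= conjCK; ring.
have k2 : x2 - x1^*%R * x3 = b2 * (1 - nc x3 ^+ 2)%:C.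
  rewrite -sub1nC normCK hx1 hx2 rmorphD rmorphM /= conjCK; ring.
apply/N7_real; rewrite k1 k2 !ncM ncR ger0_norm //.
have hb1 := @nc_ge0 R b1; have hb2 := @nc_ge0 R b2.
split; first nra.
move=> q1; rewrite hx1.
apply: le_trans (ncD _ _) _; rewrite ncM ncJ q1 mulr1; lra.
Qed.

Lemma L7_5 (x1 x2 x3 : C) : N7 x1 x2 x3 -> N5 x1 x2 x3.
Proof.
move=> h7; have [hq ex1 ex2 hb] := L7_10 h7.
have hb2 : nc x2 <= 1.
  rewrite ex2; apply: le_trans (ncD _ _) _; rewrite ncM ncJ.
  move: hb; rewrite !normE -(rmorph1 (real_complex R)) -rmorphD lecR.
  rewrite N_le1 in hq.
  have := @nc_ge0 R (betaf x1 x2 x3); have := @nc_ge0 R (betaf x2 x1 x3); nra.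
have /N7_real [h hc] := h7.
apply/N5_real; split => //.
have [[hA [hB [hQ [hE [hD1 hD2]]]]] [i1 [i2 [[e1 e2] [[d1 d1'] [d2 d2']]]]]] := facts x1 x2 x3.
have [hlt|hge] := ltrP (nc x3 ^+ 2) 1.
- have ee : (nc (x1 - x2^*%R * x3) - nc (x2 - x1^*%R * x3)) * (nc (x1 - x2^*%R * x3) + nc (x2 - x1^*%R * x3)) = (nc x1 ^+ 2 - nc x2 ^+ 2) * (1 - nc x3 ^+ 2).
    have -> : (nc (x1 - x2^*%R * x3) - nc (x2 - x1^*%R * x3)) * (nc (x1 - x2^*%R * x3) + nc (x2 - x1^*%R * x3)) = (nc (x1 - x2^*%R * x3) ^+ 2 - nc (x1 * x2 - x3) ^+ 2) - (nc (x2 - x1^*%R * x3) ^+ 2 - nc (x1 * x2 - x3) ^+ 2) by ring.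
    rewrite i1 i2; ring.
  have := R_7_5 hD1 hD2 hlt (ltac:(lra)) ee; lra.
- have q1 : nc x3 = 1 by nra.
  have := R_7_5_Q1 hA hD1 hD2 q1 (ltac:(lra)) d2 d2'; lra.
Qed.

End Pair2.

Local Open Scope complex_scope. Local Open Scope ring_scope.
Set Implicit Arguments. Unset Strict Implicit.

Lemma det2 (R : comNzRingType) (A : 'M[R]_2) : \det A = A 0 0 * A 1 1 - A 0 1 * A 1 0.
Proof.
rewrite (expand_det_row _ 0) !big_ord_recl big_ord0 /cofactor !det_mx11 !mxE /=.
have l1 : lift (0 : 'I_2) (0 : 'I_1) = 1 by apply/val_inj.
have l2 : lift (ord0 : 'I_2) (0 : 'I_1) = 1 by apply/val_inj.
have l3 : lift (ord0 : 'I_2) (ord0 : 'I_1) = 1 by apply/val_inj.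
have l4 : lift (lift (ord0 : 'I_2) (ord0 : 'I_1)) (0 : 'I_1) = 0 by apply/val_inj.
have o : (ord0 : 'I_2) = 0 by apply/val_inj.
rewrite l4 l3 o /= expr0 expr1; ring.
Qed.

Lemma sum2 (V : nmodType) (F : 'I_2 -> V) : \sum_(i < 2) F i = F 0 + F 1.
Proof.
rewrite !big_ord_recl big_ord0 addr0.
have l3 : lift (ord0 : 'I_2) (ord0 : 'I_1) = 1 by apply/val_inj.
by rewrite l3.
Qed.

Section Analytic.
Variable R : realType.
Local Notation C := R[i].
Local Notation nc := (@ComplexField.Normc.normc R).

Lemma opnP (B : 'M[C]_2) : opnorm_le1 B <-> forall v1 v2 : C,
  `|B 0 0 * v1 + B 0 1 * v2| ^+ 2 + `|B 1 0 * v1 + B 1 1 * v2| ^+ 2 <= `|v1| ^+ 2 + `|v2| ^+ 2.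
Proof.
split.
- move=> h v1 v2.
  have := h (\col_i (if i == 0 then v1 else v2)).
  by rewrite !sum2 !mxE !sum2 !mxE /=.
- move=> h v; have := h (v 0 0) (v 1 0).
  by rewrite !sum2 !mxE !sum2.
Qed.

Definition N2 (x1 x2 x3 : C) : Prop := forall z w : C, `|z| < 1 -> `|w| < 1 ->
  1 - x1 * z - x2 * w + x3 * z * w != 0.
Definition NQ (x1 x2 x3 : C) : Prop := `|x2| <= 1 /\
  forall w : C, `|w| < 1 -> `|x1 - x3 * w| <= `|1 - x2 * w|.
Definition N8 (x1 x2 x3 : C) : Prop := exists B : 'M[C]_2,
  [/\ opnorm_le1 B, x1 = B 0 0, x2 = B 1 1 & \det B = x3].
Definition N9 (x1 x2 x3 : C) : Prop := exists B : 'M[C]_2,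
  [/\ opnorm_le1 B, B^T = B, x1 = B 0 0, x2 = B 1 1 & \det B = x3].

Lemma L98 (x1 x2 x3 : C) : N9 x1 x2 x3 -> N8 x1 x2 x3.
Proof. by move=> [B [h1 _ h3 h4 h5]]; exists B. Qed.

Lemma N_lt1 (x : C) : (`|x| < 1) = (nc x < 1).
Proof. by rewrite normE -(rmorph1 (real_complex R)) ltcR. Qed.

Lemma N_sq (x : C) : `|x| ^+ 2 = (nc x ^+ 2)%:C.
Proof. by rewrite normE rmorphXn. Qed.

Lemma L82 (x1 x2 x3 : C) : N8 x1 x2 x3 -> N2 x1 x2 x3.
Proof.
move=> [B [hB -> -> hd]] z w hz hw; apply/eqP => h0.
rewrite det2 in hd.
move/opnP: hB => hB.
rewrite N_lt1 in hz; rewrite N_lt1 in hw.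
set m11 := 1 - B 0 0 * z; set m12 := - (B 0 1 * w).
set m21 := - (B 1 0 * z); set m22 := 1 - B 1 1 * w.
have hdet : m11 * m22 - m12 * m21 = 0 by rewrite -h0 -hd /m11 /m12 /m21 /m22; ring.
have ker : forall u1 u2, m11 * u1 + m12 * u2 = 0 -> m21 * u1 + m22 * u2 = 0 ->
    u1 = 0 /\ u2 = 0.
  move=> u1 u2 e1 e2.
  have := hB (z * u1) (w * u2).
  have -> : B 0 0 * (z * u1) + B 0 1 * (w * u2) = u1.
    by apply/eqP; rewrite -subr_eq0 -oppr_eq0 -e1 /m11 /m12; apply/eqP; ring.
  have -> : B 1 0 * (z * u1) + B 1 1 * (w * u2) = u2.
    by apply/eqP; rewrite -subr_eq0 -oppr_eq0 -e2 /m21 /m22; apply/eqP; ring.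
  rewrite !N_sq !ncM -!rmorphD lecR => hk.
  have := @nc_ge0 R z; have := @nc_ge0 R w.
  have := @nc_ge0 R u1; have := @nc_ge0 R u2 => g1 g2 g3 g4.
  rewrite !exprMn in hk.
  have p1 : 0 < 1 - nc z ^+ 2 by nra.
  have p2 : 0 < 1 - nc w ^+ 2 by nra.
  have t1 : 0 <= nc u1 ^+ 2 * (1 - nc z ^+ 2) by apply: mulr_ge0; [apply: sqr_ge0 | lra].
  have t2 : 0 <= nc u2 ^+ 2 * (1 - nc w ^+ 2) by apply: mulr_ge0; [apply: sqr_ge0 | lra].
  have t3 : nc u1 ^+ 2 * (1 - nc z ^+ 2) + nc u2 ^+ 2 * (1 - nc w ^+ 2) <= 0.
    suff -> : nc u1 ^+ 2 * (1 - nc z ^+ 2) + nc u2 ^+ 2 * (1 - nc w ^+ 2) = nc u1 ^+ 2 + nc u2 ^+ 2 - (nc z ^+ 2 * nc u1 ^+ 2 + nc w ^+ 2 * nc u2 ^+ 2) by lra.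
    ring.
  have a1 : nc u1 = 0.
    have : nc u1 ^+ 2 * (1 - nc z ^+ 2) = 0 by lra.
    by move/eqP; rewrite mulf_eq0 (gt_eqF p1) orbF sqrf_eq0 => /eqP.
  have a2 : nc u2 = 0.
    have : nc u2 ^+ 2 * (1 - nc w ^+ 2) = 0 by lra.
    by move/eqP; rewrite mulf_eq0 (gt_eqF p2) orbF sqrf_eq0 => /eqP.
  by split; apply/eqP; rewrite -nc_eq0; apply/eqP.
have [ka kb] := ker (- m12) m11 ltac:(ring) ltac:(rewrite -hdet; ring).
have [kc kd] := ker m22 (- m21) ltac:(rewrite -hdet; ring) ltac:(ring).
have f1 : m11 * 1 + m12 * 0 = 0 by rewrite kb; ring.
have f2 : m21 * 1 + m22 * 0 = 0 by rewrite mulr1 mulr0 addr0; apply/eqP; rewrite -oppr_eq0 kd.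
have [ke _] := ker 1 0 f1 f2.
by move/eqP: ke; rewrite oner_eq0.
Qed.

Lemma ident1 (x1 x2 s v1 v2 : C) :
  nc (x1 * v1 + s * v2) ^+ 2 + nc (s * v1 + x2 * v2) ^+ 2 =
  (nc x1 ^+ 2 + nc s ^+ 2) * nc v1 ^+ 2 + (nc s ^+ 2 + nc x2 ^+ 2) * nc v2 ^+ 2 +
  2 * complex.Re (v1 * v2^*%R * (x1 * s^*%R + s * x2^*%R)).
Proof.
case: x1 => a1 b1; case: x2 => a2 b2; case: s => a3 b3; case: v1 => a4 b4; case: v2 => a5 b5.
rewrite !conjE; simpc; rewrite !nc2 /=; ring.
Qed.

Lemma ident2 (x1 x2 s : C) :
  (nc x1 ^+ 2 + nc s ^+ 2) * (nc s ^+ 2 + nc x2 ^+ 2) - nc (x1 * s^*%R + s * x2^*%R) ^+ 2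
  = nc (x1 * x2 - s * s) ^+ 2.
Proof.
case: x1 => a1 b1; case: x2 => a2 b2; case: s => a3 b3.
rewrite !conjE; simpc; rewrite !nc2 /=; ring.
Qed.

Lemma Re_le (z : C) : complex.Re z <= nc z.
Proof.
case: z => a b /=; idtac.
apply: le_trans (ler_norm a) _; rewrite -sqrtr_sqr ler_sqrt ?addr_ge0 ?sqr_ge0 //.
by rewrite ler_wpDr ?sqr_ge0.
Qed.

Lemma R_psd (m11 m22 K V1 V2 : R) : 0 <= m11 + m22 -> 0 <= K -> K ^+ 2 <= m11 * m22 ->
  0 <= V1 -> 0 <= V2 -> 2 * (V1 * V2 * K) <= m11 * V1 ^+ 2 + m22 * V2 ^+ 2.
Proof.
move=> hs hK hp h1 h2.
have hm : 0 <= m11 * m22 by apply: le_trans hp; apply: sqr_ge0.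
have g1 : 0 <= m11 by nra.
have g2 : 0 <= m22 by nra.
apply: sq_le_abs; first by apply: addr_ge0; apply: mulr_ge0 => //; apply: sqr_ge0.
have e : (m11 * V1 ^+ 2 + m22 * V2 ^+ 2) ^+ 2 = (m11 * V1 ^+ 2 - m22 * V2 ^+ 2) ^+ 2 + 4 * (m11 * m22) * (V1 ^+ 2 * V2 ^+ 2) by ring.
have e2 : (2 * (V1 * V2 * K)) ^+ 2 = 4 * K ^+ 2 * (V1 ^+ 2 * V2 ^+ 2) by ring.
rewrite e e2.
have : 4 * K ^+ 2 * (V1 ^+ 2 * V2 ^+ 2) <= 4 * (m11 * m22) * (V1 ^+ 2 * V2 ^+ 2).
  apply: ler_wpM2r; first by apply: mulr_ge0; apply: sqr_ge0.
  by apply: ler_wpM2l.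
have := sqr_ge0 (m11 * V1 ^+ 2 - m22 * V2 ^+ 2); lra.
Qed.

Definition Bmat (x1 x2 x3 : C) : 'M[C]_2 :=
  \matrix_(i < 2, j < 2) (if i == j then (if i == 0 then x1 else x2) else sqrtC (x1 * x2 - x3)).

Lemma L69' (x1 x2 x3 : C) : N6 x1 x2 x3 ->
  [/\ opnorm_le1 (Bmat x1 x2 x3), (Bmat x1 x2 x3)^T = Bmat x1 x2 x3,
      x1 = Bmat x1 x2 x3 0 0, x2 = Bmat x1 x2 x3 1 1 & \det (Bmat x1 x2 x3) = x3].
Proof.
move=> h6; have /N6_real [hq h] := h6.
set s := sqrtC (x1 * x2 - x3).
have hs : s * s = x1 * x2 - x3 by rewrite -expr2 sqrtCK.
set B := Bmat x1 x2 x3.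
have B00 : B 0 0 = x1 by rewrite mxE.
have B11 : B 1 1 = x2 by rewrite mxE.
have B01 : B 0 1 = s by rewrite mxE.
have B10 : B 1 0 = s by rewrite mxE.
split => //.
- apply/opnP => v1 v2; rewrite B00 B01 B10 B11 !N_sq -!rmorphD lecR ident1.
  have hS : nc s ^+ 2 = nc (x1 * x2 - x3) by rewrite expr2 -ncM hs.
  have e2 := ident2 x1 x2 s; have e3 : x1 * x2 - (x1 * x2 - x3) = x3 by ring.
  rewrite hs hS e3 in e2.
  have [[hA [hB [hQ [hE [hD1 hD2]]]]] [i1 [i2 [[e1 e2'] [[d1 d1'] [d2 d2']]]]]] := facts x1 x2 x3.
  rewrite hS.
  set K := nc (x1 * s^*%R + s * x2^*%R) in e2 *.
  have hK : 0 <= K by apply: nc_ge0.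
  have hre := Re_le (v1 * v2^*%R * (x1 * s^*%R + s * x2^*%R)).
  rewrite !ncM ncJ -/K in hre.
  have hV1 := @nc_ge0 R v1; have hV2 := @nc_ge0 R v2.
  have := @R_psd (1 - nc x1 ^+ 2 - nc (x1 * x2 - x3)) (1 - nc x2 ^+ 2 - nc (x1 * x2 - x3)) K (nc v1) (nc v2).
  have hQ2 : nc x3 ^+ 2 <= 1 by rewrite expr_le1.
  move=> /(_ ltac:(lra) hK) hp.
  have hp' := hp ltac:(nra) hV1 hV2.
  nra.
- by apply/matrixP => i j; rewrite !mxE eq_sym; case: eqP => // ->.
- by rewrite det2 B00 B01 B10 B11 hs; ring.
Qed.

Lemma L69 (x1 x2 x3 : C) : N6 x1 x2 x3 -> N9 x1 x2 x3.
Proof. by move=> /L69' [h1 h2 h3 h4 h5]; exists (Bmat x1 x2 x3). Qed.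

Lemma N_le (a b : C) : (`|a| <= `|b|) = (nc a <= nc b).
Proof. by rewrite !normE lecR. Qed.

Lemma nc_gt0 (a : C) : a != 0 -> 0 < nc a.
Proof. by move=> h; rewrite lt_def nc_eq0 h nc_ge0. Qed.

Lemma L2Q (x1 x2 x3 : C) : N2 x1 x2 x3 -> NQ x1 x2 x3.
Proof.
move=> h2; split.
- rewrite N_le1; case: (lerP (nc x2) 1) => // hlt.
  have nz : x2 != 0 by rewrite -nc_eq0; apply/eqP => e; rewrite e in hlt; lra.
  have := h2 0 x2^-1.
  rewrite normr0 ltr01 N_lt1 ComplexField.Normc.normcV invf_lt1 //; last lra.
  move=> /(_ isT hlt); rewrite !mulr0 mul0r subr0 mulfV // subrr.
  by rewrite addr0 eqxx.
- move=> w hw; rewrite N_le; case: (lerP (nc (x1 - x3 * w)) (nc (1 - x2 * w))) => // hlt.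
  have hu : x1 - x3 * w != 0.
    by rewrite -nc_eq0; apply/eqP => e; rewrite e in hlt; have := @nc_ge0 R (1 - x2 * w); lra.
  have := h2 ((1 - x2 * w) / (x1 - x3 * w)) w.
  rewrite N_lt1 ncM ComplexField.Normc.normcV.
  have hpos := nc_gt0 hu.
  rewrite -/(nc (1 - x2 * w) / nc (x1 - x3 * w)) ltr_pdivrMr // mul1r.
  move=> /(_ hlt hw).
  have -> : 1 - x1 * ((1 - x2 * w) / (x1 - x3 * w)) - x2 * w + x3 * ((1 - x2 * w) / (x1 - x3 * w)) * w
     = (1 - x2 * w) - ((1 - x2 * w) / (x1 - x3 * w)) * (x1 - x3 * w) by ring.
  by rewrite divfK // subrr eqxx.
Qed.

Lemma ident3 (x1 x2 x3 w : C) :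
  nc (1 - x2 * w) ^+ 2 - nc (x1 - x3 * w) ^+ 2 =
  1 - nc x1 ^+ 2 - 2 * complex.Re ((x2 - x1^*%R * x3) * w) + (nc x2 ^+ 2 - nc x3 ^+ 2) * nc w ^+ 2.
Proof.
case: x1 => a1 b1; case: x2 => a2 b2; case: x3 => a3 b3; case: w => a4 b4.
rewrite !conjE; simpc; rewrite !nc2 /=; ring.
Qed.

Lemma ReM (r : R) (z : C) : complex.Re (z * r%:C) = complex.Re z * r.
Proof. by case: z => a b /=; ring. Qed.

Lemma R_lim (al D ga : R) :
  (forall r, 0 <= r -> r < 1 -> 0 <= al - 2 * D * r + ga * r ^+ 2) ->
  0 <= al - 2 * D * 1 + ga * 1 ^+ 2.
Proof.
move=> h; case: (lerP 0 (al - 2 * D * 1 + ga * 1 ^+ 2)) => // hlt.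
set f1 := al - 2 * D * 1 + ga * 1 ^+ 2 in hlt.
set K := 2 * `|D| + 3 * (ga ^+ 2 + 1).
have hK : 0 < K by rewrite /K; have := normr_ge0 D; have := sqr_ge0 ga; lra.
set t := - f1 / (K - f1).
have hKf : 0 < K - f1 by lra.
have ht0 : 0 < t by rewrite /t divr_gt0 //; lra.
have ht1 : t < 1 by rewrite /t ltr_pdivrMr // mul1r; lra.
have htK : t * (K - f1) = - f1 by rewrite /t divfK // gt_eqF.
have := h (1 - t) ltac:(lra) ltac:(lra).
have g1 : ga <= ga ^+ 2 + 1 by nra.
have g2 : - ga <= ga ^+ 2 + 1 by nra.
have g3 : D <= `|D| by apply: ler_norm.
have g4 : - D <= `|D| by rewrite -normrN; apply: ler_norm.
have e : al - 2 * D * (1 - t) + ga * (1 - t) ^+ 2 = f1 + 2 * D * t - 2 * ga * t + ga * t ^+ 2 by rewrite /f1; ring.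
rewrite e.
have k1 : 2 * D * t <= 2 * `|D| * t by nra.
have k2 : - (2 * ga * t) <= 2 * (ga ^+ 2 + 1) * t by nra.
have k3 : ga * t ^+ 2 <= (ga ^+ 2 + 1) * t.
  have : ga * t ^+ 2 <= (ga ^+ 2 + 1) * t ^+ 2 by nra.
  have : (ga ^+ 2 + 1) * t ^+ 2 <= (ga ^+ 2 + 1) * t.
    by apply: ler_wpM2l; [have := sqr_ge0 ga; lra | nra].
  lra.
have k4 : f1 + t * K < 0 by nra.
rewrite /K in k4; nra.
Qed.

Lemma LQ5 (x1 x2 x3 : C) : NQ x1 x2 x3 -> N5 x1 x2 x3.
Proof.
move=> [hb hq]; apply/N5_real; rewrite N_le1 in hb; split => //.
set u := x2 - x1^*%R * x3.
pose dir : C := if u == 0 then 1 else u^*%R / (nc u)%:C.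
have hdir : nc dir = 1.
  rewrite /dir; case: eqP => hu; first by rewrite ComplexField.Normc.normc1.
  have hp := nc_gt0 (introN eqP hu).
  by rewrite ncdivR // ncJ divff // gt_eqF.
have hre : complex.Re (u * dir) = nc u.
  rewrite /dir; case: eqP => hu.
  - by rewrite hu mul0r; apply/eqP; rewrite eq_sym nc_eq0.
  - have hp := nc_gt0 (introN eqP hu).
    rewrite mulrA -normCK normE -rmorphXn -rmorphV ?unitfE ?gt_eqF // -rmorphM /=.
    by rewrite expr2 mulfK // gt_eqF.
have key : forall r, 0 <= r -> r < 1 ->
    0 <= (1 - nc x1 ^+ 2) - 2 * nc u * r + (nc x2 ^+ 2 - nc x3 ^+ 2) * r ^+ 2.
  move=> r r0 r1.
  have hw : `|dir * r%:C| < 1.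
    by rewrite N_lt1 ncM hdir mul1r ncR ger0_norm.
  have := hq _ hw; rewrite N_le => hle.
  have := ident3 x1 x2 x3 (dir * r%:C).
  rewrite -/u [u * _]mulrA ReM hre ncM hdir mul1r ncR ger0_norm // => e.
  have : nc (x1 - x3 * (dir * r%:C)) ^+ 2 <= nc (1 - x2 * (dir * r%:C)) ^+ 2.
    by apply: sq_le => //; apply: nc_ge0.
  rewrite -/u in e; lra.
have := R_lim key; lra.
Qed.

End Analytic.

Local Open Scope complex_scope. Local Open Scope ring_scope.
Set Implicit Arguments. Unset Strict Implicit.

Section Hinf.
Variable R : realType.
Local Notation C := R[i].
Local Notation nc := (@ComplexField.Normc.normc R).

Definition Phin (x1 x2 x3 z : C) : option C :=
  if x1 * x2 == x3 then Some x1
  else if x2 * z != 1 then Some ((x3 * z - x1) / (x2 * z - 1)) else None.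

Definition Hn (x1 x2 x3 : C) : \bar R :=
  if `[< forall z, disc z -> Phin x1 x2 x3 z <> None >] then
    ereal_sup [set (nc w)%:E | w in
       [set w | exists2 z, disc z & Phin x1 x2 x3 z = Some w]]
  else +oo%E.

Definition N3 (x1 x2 x3 : C) : Prop :=
  (Hn x1 x2 x3 <= 1)%E /\ (x1 * x2 = x3 -> `|x2| <= 1).

Lemma LQ3 (x1 x2 x3 : C) : NQ x1 x2 x3 -> N3 x1 x2 x3.
Proof.
move=> [hb hq]; split; last by [].
have ha : nc x1 <= 1.
  have := hq 0; rewrite normr0 ltr01 !mulr0 !subr0 N_le => /(_ isT).
  by rewrite ComplexField.Normc.normc1.
rewrite N_le1 in hb.
have hdef : forall z, disc z -> x2 * z != 1.
  move=> z; rewrite /disc N_lt1 => hz; apply/eqP => e.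
  have : nc (x2 * z) = 1 by rewrite e ComplexField.Normc.normc1.
  rewrite ncM => e2; have := @nc_ge0 R x2; have := @nc_ge0 R z; nra.
rewrite /Hn asboolT; last first.
  move=> z hz; rewrite /Phin; case: ifP => // _; by rewrite (hdef z hz).
apply: ge_ereal_sup => _ [w [z hz hw] <-].
rewrite lee_fin; move: hw; rewrite /Phin; case: ifP => _.
- by move=> [<-].
- rewrite (hdef z hz) => -[<-].
  have nz : x2 * z - 1 != 0 by rewrite subr_eq0 hdef.
  rewrite ncM ComplexField.Normc.normcV.
  have hp := nc_gt0 nz.
  rewrite ler_pdivrMr // mul1r.
  have := hq z hz; rewrite N_le.
  by rewrite -(ncN (x3 * z - x1)) opprB -(ncN (x2 * z - 1)) opprB.
Qed.

Lemma L3Q (x1 x2 x3 : C) : N3 x1 x2 x3 -> NQ x1 x2 x3.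
Proof.
move=> [hH hc].
move: hH; rewrite /Hn; case: asboolP => hdef; last by [].
move=> hsup.
have hub : forall z w, disc z -> Phin x1 x2 x3 z = Some w -> nc w <= 1.
  move=> z w hz hw; rewrite -lee_fin; apply: le_trans hsup.
  by apply: ereal_sup_ubound; exists w => //; exists z.
clear hsup.
have d0 : disc (0 : C) by rewrite /disc normr0 ltr01.
case: (eqVneq (x1 * x2) x3) => hdeg.
- have hb := hc hdeg; split => //.
  have ha : nc x1 <= 1 by apply: (hub 0 x1 d0); rewrite /Phin hdeg eqxx.
  move=> w hw; rewrite N_le -hdeg.
  have -> : x1 - x1 * x2 * w = x1 * (1 - x2 * w) by ring.
  rewrite ncM; have := @nc_ge0 R (1 - x2 * w); have := @nc_ge0 R x1; nra.
- have hb : `|x2| <= 1.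
    rewrite N_le1; case: (lerP (nc x2) 1) => // hlt.
    have nz : x2 != 0 by rewrite -nc_eq0; apply/eqP => e; by rewrite e ltNge ler01 in hlt.
    exfalso; apply: (hdef x2^-1).
    + by rewrite /disc N_lt1 ComplexField.Normc.normcV invf_lt1 //; lra.
    + by rewrite /Phin (negbTE hdeg) mulfV // eqxx.
  split => // w hw.
  have hw' : x2 * w != 1.
    apply/eqP => e.
    have : nc (x2 * w) = 1 by rewrite e ComplexField.Normc.normc1.
    rewrite ncM => e2; rewrite N_le1 in hb; rewrite /disc N_lt1 in hw.
    have := @nc_ge0 R x2; have := @nc_ge0 R w; nra.
  have := hub w ((x3 * w - x1) / (x2 * w - 1)) hw.
  rewrite /Phin (negbTE hdeg) hw' => /(_ erefl).
  have nz : x2 * w - 1 != 0 by rewrite subr_eq0.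
  rewrite ncM ComplexField.Normc.normcV.
  have hp := nc_gt0 nz.
  rewrite ler_pdivrMr // mul1r N_le.
  by rewrite -(ncN (x3 * w - x1)) opprB -(ncN (x2 * w - 1)) opprB.
Qed.

End Hinf.

Local Open Scope complex_scope. Local Open Scope ring_scope.
Set Implicit Arguments. Unset Strict Implicit.

Section Conv.
Variable R : realType.
Local Notation C := R[i].
Local Notation nc := (@ComplexField.Normc.normc R).
Variables (r : R) (hr : 0 < r).
Let c : C := r%:C.

Lemma c_gt0 : 0 < c.
Proof. by rewrite /c ltcE /= eqxx hr. Qed.
Lemma c_norm : `|c| = c.
Proof. by apply: ger0_norm; apply: ltW; apply: c_gt0. Qed.
Lemma c_conj : c^*%R = c.
Proof. by rewrite /c conjE oppr0. Qed.
Lemma c_neq0 : c != 0.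
Proof. by rewrite gt_eqF // c_gt0. Qed.
Lemma c2_gt0 : 0 < c ^+ 2.
Proof. by rewrite exprn_gt0 // c_gt0. Qed.

Lemma normcx (x : C) : `|c * x| = c * `|x|.
Proof. by rewrite normrM c_norm. Qed.
Lemma normc2x (x : C) : `|c ^+ 2 * x| = c ^+ 2 * `|x|.
Proof. by rewrite normrM normrX c_norm. Qed.
Lemma conjcx (x : C) : (c * x)^*%R = c * x^*%R.
Proof. by rewrite rmorphM /= c_conj. Qed.

Lemma le_c (x : C) : (`|c * x| <= c) = (`|x| <= 1).
Proof. by rewrite normcx -{2}[c]mulr1 ler_pM2l // c_gt0. Qed.

Lemma eq_c2 (x1 x2 q : C) : (c * x1 * (c * x2) = c ^+ 2 * q) <-> (x1 * x2 = q).
Proof.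
have -> : c * x1 * (c * x2) = c ^+ 2 * (x1 * x2) by ring.
split; last by move=> ->.
by apply: mulfI; rewrite expf_neq0 // c_neq0.
Qed.

Lemma C2 (x1 x2 q : C) :
  (forall z w : C, disc z -> disc w ->
     c - c * x1 * z - c * x2 * w + c * q * z * w != 0) <-> N2 x1 x2 q.
Proof.
have e : forall z w, c - c * x1 * z - c * x2 * w + c * q * z * w = c * (1 - x1 * z - x2 * w + q * z * w) by move=> z w; ring.
split => h z w hz hw; have := h z w hz hw; by rewrite e mulf_eq0 negb_or c_neq0.
Qed.

Lemma C4 (x1 x2 q : C) :
  (c * `|c * x1 - (c * x2)^*%R * q| + `|c * x1 * (c * x2) - c ^+ 2 * q|
       <= c ^+ 2 - `|c * x2| ^+ 2 /\
     (c * x1 * (c * x2) = c ^+ 2 * q -> `|c * x1| <= c)) <-> N4 x1 x2 q.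
Proof.
rewrite le_c conjcx.
have -> : c * x1 - c * x2^*%R * q = c * (x1 - x2^*%R * q) by ring.
have -> : c * x1 * (c * x2) - c ^+ 2 * q = c ^+ 2 * (x1 * x2 - q) by ring.
rewrite normc2x !normcx.
have -> : c * (c * `|x1 - x2^*%R * q|) + c ^+ 2 * `|x1 * x2 - q| = c ^+ 2 * (`|x1 - x2^*%R * q| + `|x1 * x2 - q|) by ring.
have -> : c ^+ 2 - (c * `|x2|) ^+ 2 = c ^+ 2 * (1 - `|x2| ^+ 2) by ring.
rewrite ler_pM2l ?c2_gt0 //.
split=> -[h1 h2]; split=> // h3; apply: h2; exact/eq_c2.
Qed.

Lemma C5 (x1 x2 q : C) :
  (`|c * x1| ^+ 2 - `|c * x2| ^+ 2 + c ^+ 2 * `|q| ^+ 2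
       + 2 * c * `|c * x2 - (c * x1)^*%R * q| <= c ^+ 2 /\
     `|c * x2| <= c) <-> N5 x1 x2 q.
Proof.
rewrite le_c conjcx.
have -> : c * x2 - c * x1^*%R * q = c * (x2 - x1^*%R * q) by ring.
rewrite !normcx.
have -> : (c * `|x1|) ^+ 2 - (c * `|x2|) ^+ 2 + c ^+ 2 * `|q| ^+ 2 + 2 * c * (c * `|x2 - x1^*%R * q|)
  = c ^+ 2 * (`|x1| ^+ 2 - `|x2| ^+ 2 + `|q| ^+ 2 + 2 * `|x2 - x1^*%R * q|) by ring.
by rewrite -{2}[c ^+ 2]mulr1 ler_pM2l ?c2_gt0.
Qed.

Lemma C6 (x1 x2 q : C) :
  (`|c * x1| ^+ 2 + `|c * x2| ^+ 2 - c ^+ 2 * `|q| ^+ 2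
       + 2 * `|c * x1 * (c * x2) - c ^+ 2 * q| <= c ^+ 2) =
  (`|x1| ^+ 2 + `|x2| ^+ 2 - `|q| ^+ 2 + 2 * `|x1 * x2 - q| <= 1).
Proof.
have -> : c * x1 * (c * x2) - c ^+ 2 * q = c ^+ 2 * (x1 * x2 - q) by ring.
rewrite normc2x !normcx.
have -> : (c * `|x1|) ^+ 2 + (c * `|x2|) ^+ 2 - c ^+ 2 * `|q| ^+ 2 + 2 * (c ^+ 2 * `|x1 * x2 - q|)
  = c ^+ 2 * (`|x1| ^+ 2 + `|x2| ^+ 2 - `|q| ^+ 2 + 2 * `|x1 * x2 - q|) by ring.
by rewrite -{2}[c ^+ 2]mulr1 ler_pM2l ?c2_gt0.
Qed.

Lemma C7 (x1 x2 q : C) :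
  (`|c * x2 - (c * x1)^*%R * q| + `|c * x1 - (c * x2)^*%R * q| <= c * (1 - `|q| ^+ 2)) =
  (`|x2 - x1^*%R * q| + `|x1 - x2^*%R * q| <= 1 - `|q| ^+ 2).
Proof.
rewrite !conjcx.
have -> : c * x2 - c * x1^*%R * q = c * (x2 - x1^*%R * q) by ring.
have -> : c * x1 - c * x2^*%R * q = c * (x1 - x2^*%R * q) by ring.
by rewrite !normcx -mulrDr ler_pM2l ?c_gt0.
Qed.

End Conv.

Local Open Scope complex_scope. Local Open Scope ring_scope.
Set Implicit Arguments. Unset Strict Implicit.

Section PairAll.
Variable R : realType.
Local Notation C := R[i].

Lemma P6_2 (x1 x2 x3 : C) : N6 x1 x2 x3 <-> N2 x1 x2 x3.
Proof. by split => [/L69/L98/L82 | /L2Q/LQ5/L56]. Qed.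
Lemma P6_Q (x1 x2 x3 : C) : N6 x1 x2 x3 <-> NQ x1 x2 x3.
Proof. by split => [/P6_2/L2Q | /LQ5/L56]. Qed.
Lemma P6_3 (x1 x2 x3 : C) : N6 x1 x2 x3 <-> N3 x1 x2 x3.
Proof. by split => [/P6_Q/LQ3 | /L3Q/P6_Q]. Qed.
Lemma P6_4 (x1 x2 x3 : C) : N6 x1 x2 x3 <-> N4 x1 x2 x3.
Proof. by split => [/L64 | /L46]. Qed.
Lemma P6_5 (x1 x2 x3 : C) : N6 x1 x2 x3 <-> N5 x1 x2 x3.
Proof. by split => [/L65 | /L56]. Qed.
Lemma P6_7 (x1 x2 x3 : C) : N6 x1 x2 x3 <-> N7 x1 x2 x3.
Proof. by split => [/L67 | /L7_5/L56]. Qed.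
Lemma P6_8 (x1 x2 x3 : C) : N6 x1 x2 x3 <-> N8 x1 x2 x3.
Proof. by split => [/L69/L98 | /L82/P6_2]. Qed.
Lemma P6_9 (x1 x2 x3 : C) : N6 x1 x2 x3 <-> N9 x1 x2 x3.
Proof. by split => [/L69 | /L98/P6_8]. Qed.
Lemma P6_10 (x1 x2 x3 : C) : N6 x1 x2 x3 <-> N10 x1 x2 x3.
Proof.
split => [/L67/L7_10 [h1 h2 h3 h4] | /L10_7/P6_7//].
by split => //; exists (betaf x1 x2 x3), (betaf x2 x1 x3).
Qed.
Lemma P6_sym (x1 x2 x3 : C) : N6 x1 x2 x3 <-> N6 x2 x1 x3.
Proof. by split => /N6_sym. Qed.

End PairAll.

Section Global.
Variable R : realType.
Local Notation C := R[i].
Local Notation nc := (@ComplexField.Normc.normc R).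
Variables (n : nat) (hn : (2 <= n)%N) (ys : nat -> C) (q : C).

Definition X1 j := ys j / bin n j.
Definition X2 j := ys (n - j)%N / bin n j.
Definition HH := forall j, (1 <= j <= n./2)%N -> N6 (X1 j) (X2 j) q.

Lemma binC j : (j <= n)%N -> exists2 r : R, 0 < r & bin n j = r%:C.
Proof.
move=> hj; exists ('C(n, j))%:R; first by rewrite ltr0n bin_gt0.
by rewrite /bin rmorph_nat.
Qed.

Lemma bin_neq0 j : (j <= n)%N -> bin n j != 0 :> C.
Proof. by move=> hj; rewrite /bin pnatr_eq0 -lt0n bin_gt0. Qed.

Lemma ysE j : (j <= n)%N -> ys j = bin n j * X1 j /\ ys (n - j)%N = bin n j * X2 j.
Proof. by move=> hj; rewrite /X1 /X2 ![bin n j * _]mulrC !divfK // bin_neq0. Qed.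

Lemma bin_sym j : (j <= n)%N -> bin n (n - j) = bin n j :> C.
Proof. by move=> hj; rewrite /bin bin_sub. Qed.

Lemma Phi_eq j z : (j <= n)%N -> Phi n j ys q z = Phin (X1 j) (X2 j) q z.
Proof.
move=> hj; have [ea eb] := ysE hj.
have hc := bin_neq0 hj.
rewrite /Phi /Phin ea eb.
set c := bin n j; set a := X1 j; set b := X2 j.
have -> : (c * a * (c * b) == c ^+ 2 * q) = (a * b == q).
  have -> : c * a * (c * b) = c ^+ 2 * (a * b) by ring.
  by rewrite (inj_eq (mulfI _)) // expf_neq0.
case: eqP => _; first by rewrite mulrC mulKf.
have -> : (c * b * z != c) = (b * z != 1).
  have -> : c * b * z = c * (b * z) by ring.
  by rewrite -{2}[c]mulr1 (inj_eq (mulfI _)).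
case: ifP => // _.
have -> : c * q * z - c * a = c * (q * z - a) by ring.
have -> : c * b * z - c = c * (b * z - 1) by ring.
by rewrite invfM mulrACA divff // mul1r.
Qed.


Lemma Xsym j : (j <= n)%N -> X1 (n - j) = X2 j /\ X2 (n - j) = X1 j.
Proof.
move=> hj; rewrite /X1 /X2 bin_sym // subKn //.
Qed.

Lemma hj_n j : (1 <= j <= n./2)%N -> (j <= n)%N.
Proof. move=> /andP [h1 h2]; lia. Qed.

Lemma S2_iff :
  (forall j, (1 <= j <= n./2)%N -> forall z w : C, disc z -> disc w ->
     bin n j - ys j * z - ys (n - j)%N * w + bin n j * q * z * w != 0) <-> HH.
Proof.
split => h j hj; have hjn := hj_n hj; have [ea eb] := ysE hjn; have [r hr hc] := binC hjn.
- by have := h j hj; rewrite ea eb hc => /(C2 hr) /P6_2.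
- by rewrite ea eb hc; apply/(C2 hr)/P6_2; exact: h.
Qed.

Lemma Hinf_eq j : (j <= n)%N -> Hinf_norm n j ys q = Hn (X1 j) (X2 j) q.
Proof.
move=> hj; have e : Phi n j ys q = Phin (X1 j) (X2 j) q.
  by apply: funext => z; exact: Phi_eq.
by rewrite /Hinf_norm /Hn e.
Qed.

Lemma Hinf_eq' j : (j <= n)%N -> Hinf_norm n (n - j) ys q = Hn (X2 j) (X1 j) q.
Proof.
move=> hj; rewrite Hinf_eq ?leq_subr //.
by have [-> ->] := Xsym hj.
Qed.

Lemma S3_iff :
  (forall j, (1 <= j <= n./2)%N ->
     (Hinf_norm n j ys q <= 1)%E /\
     (ys j * ys (n - j)%N = bin n j ^+ 2 * q -> `|ys (n - j)%N| <= bin n j)) <-> HH.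
Proof.
split => h j hj; have hjn := hj_n hj; have [ea eb] := ysE hjn; have [r hr hc] := binC hjn.
- have [h1 h2] := h j hj; apply/P6_3; split; first by rewrite -Hinf_eq.
  move: h2; rewrite ea eb hc (le_c hr) => h2 e; apply: h2; exact/(eq_c2 hr).
- have [h1 h2] := iffLR (P6_3 _ _ _) (h j hj); split; first by rewrite Hinf_eq.
  rewrite ea eb hc (le_c hr) => e; apply: h2; exact/(eq_c2 hr).
Qed.

Lemma S3'_iff :
  (forall j, (1 <= j <= n./2)%N ->
     (Hinf_norm n (n - j) ys q <= 1)%E /\
     (ys j * ys (n - j)%N = bin n j ^+ 2 * q -> `|ys j| <= bin n j)) <-> HH.
Proof.
split => h j hj; have hjn := hj_n hj; have [ea eb] := ysE hjn; have [r hr hc] := binC hjn.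
- have [h1 h2] := h j hj; apply/P6_sym/P6_3; split; first by rewrite -Hinf_eq'.
  move: h2; rewrite [ys j * _]mulrC ea eb hc (le_c hr) => h2 e; apply: h2; exact/(eq_c2 hr).
- have [h1 h2] := iffLR (P6_3 _ _ _) (iffLR (P6_sym _ _ _) (h j hj)); split; first by rewrite Hinf_eq'.
  rewrite [ys j * _]mulrC ea eb hc (le_c hr) => e; apply: h2; exact/(eq_c2 hr).
Qed.

Lemma S4_iff :
  (forall j, (1 <= j <= n./2)%N ->
     bin n j * `|ys j - (ys (n - j)%N)^* * q| + `|ys j * ys (n - j)%N - bin n j ^+ 2 * q|
       <= bin n j ^+ 2 - `|ys (n - j)%N| ^+ 2 /\
     (ys j * ys (n - j)%N = bin n j ^+ 2 * q -> `|ys j| <= bin n j)) <-> HH.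
Proof.
split => h j hj; have hjn := hj_n hj; have [ea eb] := ysE hjn; have [r hr hc] := binC hjn.
- by have := h j hj; rewrite ea eb hc => /(C4 hr) /P6_4.
- by rewrite ea eb hc; apply/(C4 hr)/P6_4; exact: h.
Qed.

Lemma S4'_iff :
  (forall j, (1 <= j <= n./2)%N ->
     bin n j * `|ys (n - j)%N - (ys j)^* * q| + `|ys j * ys (n - j)%N - bin n j ^+ 2 * q|
       <= bin n j ^+ 2 - `|ys j| ^+ 2 /\
     (ys j * ys (n - j)%N = bin n j ^+ 2 * q -> `|ys (n - j)%N| <= bin n j)) <-> HH.
Proof.
split => h j hj; have hjn := hj_n hj; have [ea eb] := ysE hjn; have [r hr hc] := binC hjn.
- by have := h j hj; rewrite [ys j * _]mulrC ea eb hc => /(C4 hr) /P6_4 /P6_sym.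
- by rewrite [ys j * _]mulrC ea eb hc; apply/(C4 hr)/P6_4/P6_sym; exact: h.
Qed.

Lemma S5_iff :
  (forall j, (1 <= j <= n./2)%N ->
     `|ys j| ^+ 2 - `|ys (n - j)%N| ^+ 2 + bin n j ^+ 2 * `|q| ^+ 2
       + 2 * bin n j * `|ys (n - j)%N - (ys j)^* * q| <= bin n j ^+ 2 /\
     `|ys (n - j)%N| <= bin n j) <-> HH.
Proof.
split => h j hj; have hjn := hj_n hj; have [ea eb] := ysE hjn; have [r hr hc] := binC hjn.
- by have := h j hj; rewrite ea eb hc => /(C5 hr) /P6_5.
- by rewrite ea eb hc; apply/(C5 hr)/P6_5; exact: h.
Qed.

Lemma S5'_iff :
  (forall j, (1 <= j <= n./2)%N ->
     `|ys (n - j)%N| ^+ 2 - `|ys j| ^+ 2 + bin n j ^+ 2 * `|q| ^+ 2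
       + 2 * bin n j * `|ys j - (ys (n - j)%N)^* * q| <= bin n j ^+ 2 /\
     `|ys j| <= bin n j) <-> HH.
Proof.
split => h j hj; have hjn := hj_n hj; have [ea eb] := ysE hjn; have [r hr hc] := binC hjn.
- by have := h j hj; rewrite ea eb hc => /(C5 hr) /P6_5 /P6_sym.
- by rewrite ea eb hc; apply/(C5 hr)/P6_5/P6_sym; exact: h.
Qed.

Lemma one_in : (1 <= 1 <= n./2)%N.
Proof. lia. Qed.

Lemma S6_iff :
  (`|q| <= 1 /\
   forall j, (1 <= j <= n./2)%N ->
     `|ys j| ^+ 2 + `|ys (n - j)%N| ^+ 2 - bin n j ^+ 2 * `|q| ^+ 2
       + 2 * `|ys j * ys (n - j)%N - bin n j ^+ 2 * q| <= bin n j ^+ 2) <-> HH.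
Proof.
split.
- move=> [hq h] j hj; have hjn := hj_n hj; have [ea eb] := ysE hjn; have [r hr hc] := binC hjn.
  split => //; by have := h j hj; rewrite ea eb hc (C6 hr).
- move=> h; split; first by have [] := h 1%N one_in.
  move=> j hj; have hjn := hj_n hj; have [ea eb] := ysE hjn; have [r hr hc] := binC hjn.
  by rewrite ea eb hc (C6 hr); have [] := h j hj.
Qed.

Lemma S7_iff :
  ((forall j, (1 <= j <= n./2)%N ->
     `|ys (n - j)%N - (ys j)^* * q| + `|ys j - (ys (n - j)%N)^* * q|
       <= bin n j * (1 - `|q| ^+ 2)) /\
   (`|q| = 1 -> forall j, (1 <= j <= n./2)%N -> `|ys j| <= bin n j)) <-> HH.
Proof.
split.
- move=> [h1 h2] j hj; have hjn := hj_n hj; have [ea eb] := ysE hjn; have [r hr hc] := binC hjn.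
  apply/P6_7; split.
  + by have := h1 j hj; rewrite ea eb hc (C7 hr).
  + by move=> hq; have := h2 hq j hj; rewrite ea hc (le_c hr).
- move=> h; split.
  + move=> j hj; have hjn := hj_n hj; have [ea eb] := ysE hjn; have [r hr hc] := binC hjn.
    by rewrite ea eb hc (C7 hr); have [] := iffLR (P6_7 _ _ _) (h j hj).
  + move=> hq j hj; have hjn := hj_n hj; have [ea eb] := ysE hjn; have [r hr hc] := binC hjn.
    by rewrite ea hc (le_c hr); have [_ ] := iffLR (P6_7 _ _ _) (h j hj); apply.
Qed.


Lemma S8_iff :
  (exists B : nat -> 'M[C]_2, forall j, (1 <= j <= n./2)%N ->
     [/\ opnorm_le1 (B j), ys j = bin n j * B j 0 0,
         ys (n - j)%N = bin n j * B j 1 1 & \det (B j) = q]) <-> HH.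
Proof.
split.
- move=> [B hB] j hj; have hjn := hj_n hj; have [ea eb] := ysE hjn.
  have [h1 h2 h3 h4] := hB j hj.
  apply/P6_8; exists (B j); split => //.
  + by apply: (mulfI (bin_neq0 hjn)); rewrite -ea h2.
  + by apply: (mulfI (bin_neq0 hjn)); rewrite -eb h3.
- move=> h; exists (fun j => Bmat (X1 j) (X2 j) q) => j hj.
  have hjn := hj_n hj; have [ea eb] := ysE hjn.
  have [h1 h2 h3 h4 h5] := L69' (h j hj).
  by split => //; [rewrite -h3 | rewrite -h4].
Qed.

Lemma S9_iff :
  (exists B : nat -> 'M[C]_2, forall j, (1 <= j <= n./2)%N ->
     [/\ opnorm_le1 (B j), (B j)^T = B j, ys j = bin n j * B j 0 0,
         ys (n - j)%N = bin n j * B j 1 1 & \det (B j) = q]) <-> HH.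
Proof.
split.
- move=> [B hB] j hj; have hjn := hj_n hj; have [ea eb] := ysE hjn.
  have [h1 h1' h2 h3 h4] := hB j hj.
  apply/P6_9; exists (B j); split => //.
  + by apply: (mulfI (bin_neq0 hjn)); rewrite -ea h2.
  + by apply: (mulfI (bin_neq0 hjn)); rewrite -eb h3.
- move=> h; exists (fun j => Bmat (X1 j) (X2 j) q) => j hj.
  have hjn := hj_n hj; have [ea eb] := ysE hjn.
  have [h1 h2 h3 h4 h5] := L69' (h j hj).
  by split => //; [rewrite -h3 | rewrite -h4].
Qed.

Lemma S10_iff :
  (`|q| <= 1 /\
   exists beta : nat -> C, forall j, (1 <= j <= n./2)%N ->
     [/\ ys j = beta j + (beta (n - j)%N)^* * q,
         ys (n - j)%N = beta (n - j)%N + (beta j)^* * q &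
         `|beta j| + `|beta (n - j)%N| <= bin n j]) <-> HH.
Proof.
split.
- move=> [hq [beta hb]] j hj; have hjn := hj_n hj; have [ea eb] := ysE hjn.
  have [r hr hc] := binC hjn.
  have [e1 e2 e3] := hb j hj.
  rewrite hc in ea eb e3.
  set b1 := beta j / r%:C; set b2 := beta (n - j)%N / r%:C.
  have cn : r%:C != 0 :> C by apply: (c_neq0 hr).
  have eb1 : beta j = r%:C * b1 by rewrite /b1 mulrC divfK.
  have eb2 : beta (n - j)%N = r%:C * b2 by rewrite /b2 mulrC divfK.
  apply/P6_10; split => //; exists b1, b2; split.
  + by apply: (mulfI cn); rewrite -ea e1 eb1 eb2 (conjcx r); ring.
  + by apply: (mulfI cn); rewrite -eb e2 eb1 eb2 (conjcx r); ring.
  + move: e3; rewrite eb1 eb2 !(normcx hr) -mulrDr.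
    by rewrite -{2}[r%:C]mulr1 ler_pM2l ?(c_gt0 hr).
- move=> h; split; first by have [] := h 1%N one_in.
  exists (fun k => bin n k * betaf (X1 k) (X2 k) q) => j hj.
  have hjn := hj_n hj; have [ea eb] := ysE hjn; have [r hr hc] := binC hjn.
  have [h1 h2 h3 h4] := L7_10 (L67 (h j hj)).
  have [s1 s2] := Xsym hjn.
  rewrite (bin_sym hjn) s1 s2 ea eb hc !(conjcx r); split.
  + by rewrite {1}h2; ring.
  + by rewrite {1}h3; ring.
  + by rewrite !(normcx hr) -mulrDr -{2}[r%:C]mulr1 ler_pM2l ?(c_gt0 hr).
Qed.

End Global.

Local Open Scope complex_scope. Local Open Scope ring_scope.
Set Implicit Arguments. Unset Strict Implicit.

Section Gam.
Variable R : realType.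
Local Notation C := R[i].
Local Notation nc := (@ComplexField.Normc.normc R).

Lemma conjR (t : R) : (t%:C)^*%R = t%:C :> C.
Proof. by rewrite conjE oppr0. Qed.

Lemma N_lt (a b : C) : (`|a| < `|b|) = (nc a < nc b).
Proof. by rewrite !normE ltcR. Qed.

Lemma R_eps (x y K : R) : 0 <= K -> (forall e, 0 < e -> x <= y + K * e) -> x <= y.
Proof.
move=> hK h; case: (lerP x y) => // hlt.
have hK1 : 0 < K + 1 by lra.
have hd : 0 < (x - y) / (K + 1) by apply: divr_gt0; lra.
have := h _ hd.
have : K * ((x - y) / (K + 1)) < x - y.
  rewrite mulrA ltr_pdivrMr //.
  have : 0 < (x - y) by lra.
  move=> p; rewrite mulrDr ?mulr1 [K * _]mulrC; lra.
lra.
Qed.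

Variables (n : nat) (hn : (2 <= n)%N) (ys : nat -> C) (q : C).

Definition Mb : R := (\sum_(k < n.+1) 'C(n, k))%:R.

Lemma bin_le_M j : (j <= n)%N -> ('C(n, j))%:R <= Mb.
Proof.
move=> hj; rewrite /Mb ler_nat.
rewrite (bigD1 (Ordinal (hj : (j < n.+1)%N))) //= leq_addr //.
Qed.

Lemma ext_beta (beta : nat -> C) :
  (forall j, (1 <= j <= n./2)%N ->
     [/\ ys j = beta j + (beta (n - j)%N)^* * q,
         ys (n - j)%N = beta (n - j)%N + (beta j)^* * q &
         `|beta j| + `|beta (n - j)%N| <= bin n j]) ->
  forall j, (1 <= j <= n.-1)%N ->
    ys j = beta j + (beta (n - j)%N)^* * q /\
    `|beta j| + `|beta (n - j)%N| <= bin n j.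
Proof.
move=> hb j /andP [hj1 hj2].
case: (leqP j n./2) => hjh.
- by have [e1 _ e3] := hb j ltac:(apply/andP; split => //).
- have hk : (1 <= n - j <= n./2)%N by apply/andP; split; lia.
  have [_ e2 e3] := hb _ hk.
  have hjn : (n - (n - j) = j)%N by lia.
  rewrite hjn in e2 e3; split => //.
  by rewrite addrC -(@bin_sym R n j) //; lia.
Qed.


Lemma binR j : bin n j = ((('C(n, j))%:R : R)%:C : C).
Proof. by rewrite /bin rmorph_nat. Qed.

Lemma HH_Gam : HH n ys q -> Gammat n ys q.
Proof.
move=> h; have [hq [beta hb]] := iffRL (S10_iff hn ys q) h.
have ext := ext_beta hb.
rewrite N_le1 in hq.
move=> e he.
have hM : 0 <= Mb by rewrite /Mb ler0n.
set d := e / (e + 2 * Mb + 2).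
have hden : 0 < e + 2 * Mb + 2 by lra.
have hd0 : 0 < d by apply: divr_gt0.
have hdd : d * (e + 2 * Mb + 2) = e by rewrite /d divfK // gt_eqF.
have hd1 : d < 1 by rewrite /d ltr_pdivrMr // mul1r; lra.
have hde : d < e by nra.
have hdM : 2 * d * Mb < e by nra.
set t := 1 - d.
have hq0 := @nc_ge0 R q.
exists (fun k => t%:C * beta k + (t%:C * beta (n - k)%N)^*%R * (t%:C * q)), (t%:C * q).
split; [split | split].
- rewrite /disc N_lt1 ncM ncR ger0_norm /t; [nra | lra].
- exists (fun k => t%:C * beta k) => j hj; split => //.
  have [_ hn'] := ext j hj.
  move: hn'; rewrite binR !normE -rmorphD lecR => hn'.
  rewrite !ncM ncR ger0_norm /t; last lra.
  rewrite -rmorphD ltcR.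
  have hj' : (j <= n)%N by move: hj => /andP [_ ?]; lia.
  have hb0 : (0 : R) < ('C(n, j))%:R by rewrite ltr0n bin_gt0.
  have := @nc_ge0 R (beta j); have := @nc_ge0 R (beta (n - j)%N); nra.
- have -> : q - t%:C * q = d%:C * q by rewrite /t rmorphB rmorph1; ring.
  rewrite ncM ncR ger0_norm; [nra | lra].
- move=> j hj; have [e1 hn'] := ext j hj.
  move: hn'; rewrite binR !normE -rmorphD lecR => hn'.
  have hj' : (j <= n)%N by move: hj => /andP [_ ?]; lia.
  have hbM := bin_le_M hj'.
  have eT : t%:C = 1 - d%:C :> C by rewrite /t rmorphB rmorph1.
  have -> : ys j - (t%:C * beta j + (t%:C * beta (n - j)%N)^*%R * (t%:C * q)) =
      d%:C * beta j + (d * (2 - d))%:C * ((beta (n - j)%N)^*%R * q).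
    have c1 : (t%:C * beta (n - j)%N)^*%R = t%:C * (beta (n - j)%N)^*%R :> C by rewrite rmorphM /= conjR.
    have c2 : (d * (2 - d))%:C = d%:C * (2 - d%:C) :> C by rewrite rmorphM rmorphB /= rmorph_nat.
    rewrite e1 c1 c2 eT; ring.
  apply: le_lt_trans (ncD _ _) _.
  rewrite !ncM ncJ !ncR !ger0_norm; [|nra|lra].
  have := @nc_ge0 R (beta j); have := @nc_ge0 R (beta (n - j)%N) => g1 g2.
  have a1 : nc (beta (n - j)%N) * nc q <= nc (beta (n - j)%N) by rewrite ler_piMr.
  have a2 : 0 <= d * (2 - d) by apply: mulr_ge0; lra.
  have a3 : d * (2 - d) <= 2 * d by nra.
  have k1 : d * (2 - d) * (nc (beta (n - j)%N) * nc q) <= 2 * d * nc (beta (n - j)%N).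
    apply: le_trans (ler_wpM2l a2 a1) _; apply: ler_wpM2r => //.
  have k2 : d * nc (beta j) <= 2 * d * nc (beta j) by nra.
  have k3 : 2 * d * (nc (beta j) + nc (beta (n - j)%N)) <= 2 * d * Mb.
    apply: ler_wpM2l; first lra.
    lra.
  lra.
Qed.


Lemma NQ_unnorm (r : R) (hr : 0 < r) (a b q0 : C) :
  NQ (a / r%:C) (b / r%:C) q0 <->
  nc b <= r /\ forall w : C, nc w < 1 -> nc (a - r%:C * q0 * w) <= nc (r%:C - b * w).
Proof.
have cn : r%:C != 0 :> C by apply: (c_neq0 hr).
have e1 : forall w, a / r%:C - q0 * w = (a - r%:C * q0 * w) / r%:C by move=> w; field.
have e2 : forall w, 1 - b / r%:C * w = (r%:C - b * w) / r%:C by move=> w; field.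
rewrite /NQ N_le1 ncdivR // ler_pdivrMr // mul1r.
split => -[h1 h2]; split => // w hw.
- by have := h2 w; rewrite N_lt1 N_le e1 e2 !ncdivR // ler_pM2r ?invr_gt0 //; apply.
- by rewrite N_le e1 e2 !ncdivR // ler_pM2r ?invr_gt0 //; apply: h2; rewrite -N_lt1.
Qed.

Lemma Gam_HH : Gammat n ys q -> HH n ys q.
Proof.
move=> hG j hj; apply/P6_Q.
have hjn : (j <= n)%N by move: hj => /andP [? ?]; lia.
have [r hr hc] := binC R hjn.
have approx : forall e, 0 < e -> exists ys' q', NQ (X1 n ys' j) (X2 n ys' j) q' /\
    nc (q - q') < e /\ nc (ys j - ys' j) < e /\ nc (ys (n - j)%N - ys' (n - j)%N) < e.
  move=> e he; have [ys' [q' [[hq' [beta hb]] [hqq hyy]]]] := hG e he.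
  exists ys', q'; split; last first.
    split => //; split; apply: hyy; apply/andP; split; move: hj => /andP [? ?]; lia.
  apply/P6_Q; apply: (iffLR (S10_iff hn ys' q')) => //.
  split; first by apply: ltW.
  exists beta => k hk.
  have hk1 : (1 <= k <= n.-1)%N by move: hk => /andP [? ?]; apply/andP; split; lia.
  have hk2 : (1 <= n - k <= n.-1)%N by move: hk => /andP [? ?]; apply/andP; split; lia.
  have [f1 f2] := hb k hk1; have [g1 _] := hb (n - k)%N hk2.
  have hkk : (n - (n - k) = k)%N by move: hk => /andP [? ?]; lia.
  rewrite hkk in g1; split => //; exact: ltW.
rewrite /X1 /X2 hc; apply/(NQ_unnorm hr); split.
- apply: (@R_eps _ _ 1 ler01) => e he.
  have [ys' [q' [hQ [_ [_ h3]]]]] := approx e he.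
  move: hQ; rewrite /X1 /X2 hc => /(NQ_unnorm hr) [hb' _].
  have := ncD (ys (n - j)%N - ys' (n - j)%N) (ys' (n - j)%N); rewrite subrK; lra.
- move=> w hw.
  have hw0 := @nc_ge0 R w.
  apply: (@R_eps _ _ (2 + r)) => [|e he]; first lra.
  have [ys' [q' [hQ [h1 [h2 h3]]]]] := approx e he.
  move: hQ; rewrite /X1 /X2 hc => /(NQ_unnorm hr) [_ hw'].
  have k := hw' w hw.
  have t1 := ncD ((ys j - ys' j) - r%:C * (q - q') * w) (ys' j - r%:C * q' * w).
  have t2 := ncD ((ys (n - j)%N - ys' (n - j)%N) * w) (r%:C - ys (n - j)%N * w).
  have E1 : ys j - ys' j - r%:C * (q - q') * w + (ys' j - r%:C * q' * w) = ys j - r%:C * q * w.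
    by set c := r%:C; ring.
  have E2 : (ys (n - j)%N - ys' (n - j)%N) * w + (r%:C - ys (n - j)%N * w) = r%:C - ys' (n - j)%N * w.
    by set c := r%:C; ring.
  rewrite E1 in t1; rewrite E2 in t2.
  have t3 := ncD (ys j - ys' j) (- (r%:C * (q - q') * w)).
  rewrite ncN !ncM ncR ger0_norm in t3; last lra.
  rewrite ncM in t2.
  have a1 : r * nc (q - q') * nc w <= r * e.
    rewrite -mulrA; apply: ler_wpM2l; first lra.
    have := @nc_ge0 R (q - q'); nra.
  have a2 : nc (ys (n - j)%N - ys' (n - j)%N) * nc w <= e.
    have := @nc_ge0 R (ys (n - j)%N - ys' (n - j)%N); nra.
  lra.
Qed.

End Gam.

Unset Implicit Arguments. Set Strict Implicit.
Local Close Scope complex_scope.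
Local Open Scope ring_scope.

(* y = (y_1, ..., y_{n-1}, q) is given by ys (ys j = y_j, 1 <= j <= n-1) and q;
   "for all j" means for all 1 <= j <= n./2 = [n/2]. *)
Theorem mainTheorem3 (R : realType) (n : nat) (hn : (2 <= n)%N)
    (ys : nat -> R[i]) (q : R[i]) :
  [<->
  (* (1) *)
  Gammat n ys q;
  (* (2) *)
  (forall j, (1 <= j <= n./2)%N -> forall z w : R[i], disc z -> disc w ->
     bin n j - ys j * z - ys (n - j)%N * w + bin n j * q * z * w != 0);
  (* (3) *)
  (forall j, (1 <= j <= n./2)%N ->
     (Hinf_norm n j ys q <= 1)%E /\
     (ys j * ys (n - j)%N = bin n j ^+ 2 * q -> `|ys (n - j)%N| <= bin n j));
  (* (3') *)
  (forall j, (1 <= j <= n./2)%N ->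
     (Hinf_norm n (n - j) ys q <= 1)%E /\
     (ys j * ys (n - j)%N = bin n j ^+ 2 * q -> `|ys j| <= bin n j));
  (* (4) *)
  (forall j, (1 <= j <= n./2)%N ->
     bin n j * `|ys j - (ys (n - j)%N)^* * q| + `|ys j * ys (n - j)%N - bin n j ^+ 2 * q|
       <= bin n j ^+ 2 - `|ys (n - j)%N| ^+ 2 /\
     (ys j * ys (n - j)%N = bin n j ^+ 2 * q -> `|ys j| <= bin n j));
  (* (4') *)
  (forall j, (1 <= j <= n./2)%N ->
     bin n j * `|ys (n - j)%N - (ys j)^* * q| + `|ys j * ys (n - j)%N - bin n j ^+ 2 * q|
       <= bin n j ^+ 2 - `|ys j| ^+ 2 /\
     (ys j * ys (n - j)%N = bin n j ^+ 2 * q -> `|ys (n - j)%N| <= bin n j));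
  (* (5) *)
  (forall j, (1 <= j <= n./2)%N ->
     `|ys j| ^+ 2 - `|ys (n - j)%N| ^+ 2 + bin n j ^+ 2 * `|q| ^+ 2
       + 2 * bin n j * `|ys (n - j)%N - (ys j)^* * q| <= bin n j ^+ 2 /\
     `|ys (n - j)%N| <= bin n j);
  (* (5') *)
  (forall j, (1 <= j <= n./2)%N ->
     `|ys (n - j)%N| ^+ 2 - `|ys j| ^+ 2 + bin n j ^+ 2 * `|q| ^+ 2
       + 2 * bin n j * `|ys j - (ys (n - j)%N)^* * q| <= bin n j ^+ 2 /\
     `|ys j| <= bin n j);
  (* (6) *)
  (`|q| <= 1 /\
   forall j, (1 <= j <= n./2)%N ->
     `|ys j| ^+ 2 + `|ys (n - j)%N| ^+ 2 - bin n j ^+ 2 * `|q| ^+ 2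
       + 2 * `|ys j * ys (n - j)%N - bin n j ^+ 2 * q| <= bin n j ^+ 2);
  (* (7) *)
  ((forall j, (1 <= j <= n./2)%N ->
     `|ys (n - j)%N - (ys j)^* * q| + `|ys j - (ys (n - j)%N)^* * q|
       <= bin n j * (1 - `|q| ^+ 2)) /\
   (`|q| = 1 -> forall j, (1 <= j <= n./2)%N -> `|ys j| <= bin n j));
  (* (8) *)
  (exists B : nat -> 'M[R[i]]_2, forall j, (1 <= j <= n./2)%N ->
     [/\ opnorm_le1 (B j), ys j = bin n j * B j 0 0,
         ys (n - j)%N = bin n j * B j 1 1 & \det (B j) = q]);
  (* (9) *)
  (exists B : nat -> 'M[R[i]]_2, forall j, (1 <= j <= n./2)%N ->
     [/\ opnorm_le1 (B j), (B j)^T = B j, ys j = bin n j * B j 0 0,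
         ys (n - j)%N = bin n j * B j 1 1 & \det (B j) = q]);
  (* (10) *)
  (`|q| <= 1 /\
   exists beta : nat -> R[i], forall j, (1 <= j <= n./2)%N ->
     [/\ ys j = beta j + (beta (n - j)%N)^* * q,
         ys (n - j)%N = beta (n - j)%N + (beta j)^* * q &
         `|beta j| + `|beta (n - j)%N| <= bin n j])
  ].
Proof.
have s1 : Gammat n ys q <-> HH n ys q by split; [exact: Gam_HH | exact: HH_Gam].
have s2 := S2_iff hn ys q. have s3 := S3_iff hn ys q. have s3' := S3'_iff hn ys q.
have s4 := S4_iff hn ys q. have s4' := S4'_iff hn ys q. have s5 := S5_iff hn ys q.
have s5' := S5'_iff hn ys q. have s6 := S6_iff hn ys q. have s7 := S7_iff hn ys q.
have s8 := S8_iff hn ys q. have s9 := S9_iff hn ys q. have s10 := S10_iff hn ys q.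
tfae.
- by move/s1/s2.
- by move/s2/s3.
- by move/s3/s3'.
- by move/s3'/s4.
- by move/s4/s4'.
- by move/s4'/s5.
- by move/s5/s5'.
- by move/s5'/s6.
- by move/s6/s7.
- by move/s7/s8.
- by move/s8/s9.
- by move/s9/s10.
- by move/s10/s1.
Qed.
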